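(* The map $T:\mathbb{T}^2\to\mathbb{T}^2$ is continuous and surjective, and $T\circ P=P\circ T$. Moreover, for every $x\in\mathbb{T}^1\setminus\mathfrak{O}^-$ one has $\mu_x[0,\tau_x(y)]=y$ for all $y\in[0,1]$, and $y\mapsto\tau_x(y)$ is strictly increasing on $[0,1]$; consequently $T$ is injective on $\mathbb{T}^2\setminus(\mathfrak{O}^-\times\mathbb{T}^1)$ and maps each fiber $\{x\}\times\mathbb{T}^1$, $x\notin\mathfrak O^-$, bijectively onto itself.
   Context: Notation: $\mathbb{T}^1=\mathbb{R}/\mathbb{Z}$, $\mathbb{T}^2=\mathbb{T}^1\times\mathbb{T}^1$, $\lambda$ is Lebesgue probability measure on $\mathbb{T}^1$. For reals $a\le b\le a+1$, $[a,b]$ denotes the image in $\mathbb{T}^1$ of the real interval $[a,b]$; so $[0,1]=\mathbb{T}^1$, $[0,0]=\{0\}$. $P(x,y)=(x+\tfrac12,1-y)$ on $\mathbb{T}^2$. Standing setup: $\alpha$ is irrational, $R(x)=x+\alpha$ on $\mathbb{T}^1$. $r:\mathbb{T}^1\to\mathbb{R}$ is continuous with $r(x+\tfrac12)=-r(x)$, $r(0)=r(\tfrac12)=0$, $0<r(x)<\tfrac14$ for $x\in(0,\tfrac12)$, and such that $S(x,y)=(x+\alpha,\,y+r(x))$ is a minimal homeomorphism of $\mathbb{T}^2$. Put $\sigma_x(y)=y+r(x)$, $\sigma_x^0=\mathrm{id}$, $\sigma^n_x=\sigma_{R^{n-1}(x)}\circ\cdots\circ\sigma_{R(x)}\circ\sigma_x$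 ($n\ge1$), so $S^n(x,y)=(R^n(x),\sigma^n_x(y))$. Fix $x_1^*\in(0.1,0.2)\cap\mathbb{Q}$, $x_2^*=x_1^*+\tfrac12$, $y_1^*\in\mathbb{T}^1$, $y_2^*=1-y_1^*$, $z_j^*=(x_j^*,y_j^* )$, such that for all $m\in\mathbb{Z}$ and $j=1,2$ the second coordinate $Y$ of $S^m(z_j^* )$ satisfies $Y\neq0$ and $Y\ne -r(R^m(x_j^* ))$. Fix $\bar x_1<x_1^*<\bar x_2$ with $[\bar x_1,\bar x_2]\subset(0,\tfrac12)$ and continuous $\tilde\psi,\tilde\phi:[\bar x_1,\bar x_2]\to[0,1]$ with $\tilde\psi(\bar x_1)=0$, $\tilde\phi(\bar x_1)=1$, $\tilde\psi(\bar x_2)=1$, $\tilde\phi(\bar x_2)=0$, $\tilde\psi<\tilde\phi$ on $[\bar x_1,x_1^* )$, $\tilde\psi>\tilde\phi$ on $(x_1^*,\bar x_2]$, and $\tilde\psi(x_1^* )=\tilde\phi(x_1^* )\equiv y_1^*\pmod 1$. Define Borel probability measures $\mu_x^0$ on $\mathbb{T}^1$: $\mu^0_x=\lambda$ if $x\notin(\bar x_1,\bar x_2)\cup(\bar x_1+\tfrac12,\bar x_2+\tfrac12)$; $\mu^0_{x_j^*}=\delta_{y_j^*}$; for $x\in(\bar x_1,\bar x_2)\setminus\{x_1^*\}$, $\mu^0_x(A)=\lambda(A\cap I_x)/|\tilde\phi(x)-\tilde\psi(x)|$ where $I_x$ is the image in $\mathbb{T}^1$ of the real interval with endpoints $\tilde\psi(x),\tilde\phi(x)$;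 for $x=u+\tfrac12$ with $u\in(\bar x_1,\bar x_2)\setminus\{x_1^*\}$, $\mu^0_x(A)=\mu^0_u(\{1-y:y\in A\})$. For $n\ge0$ let $\mu^n_x(A)=\mu^0_{R^n(x)}(\sigma^n_x(A))$, and $\mu_x=\tfrac12\big(\lambda+\sum_{n\ge0}2^{-n-1}\mu^n_x\big)$. For $x\in\mathbb{T}^1$, $y\in[0,1]$ let $\tau_x(y)=\min\{y'\in[0,1]:\mu_x[0,y']\ge y\}$ (one has $\tau_x(0)=0$, $\tau_x(1)=1$), and $T(x,y)=(x,\tau_x(y))$. Let $\mathfrak{O}^-=\{R^j(x_k^* ): j\le0,\ k=1,2\}$. *)

(* Defs.v *)
From Stdlib Require Import Reals Lra ClassicalEpsilon.
Open Scope R_scope.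

(** * The circle T^1 = R/Z and the torus T^2, represented by real lifts *)

(* fractional part, in [0,1) ; Int_part z = floor z *)
Definition frac (z : R) : R := z - IZR (Int_part z).

Definition eqT1 (u v : R) : Prop := exists k : Z, u = v + IZR k.
Definition eqT2 (p q : R * R) : Prop := eqT1 (fst p) (fst q) /\ eqT1 (snd p) (snd q).

Definition dT1 (u v : R) : R := Rmin (frac (u - v)) (1 - frac (u - v)).
Definition dT2 (p q : R * R) : R := Rmax (dT1 (fst p) (fst q)) (dT1 (snd p) (snd q)).

Definition torus_continuous (F : R * R -> R * R) : Prop :=
  forall p eps, 0 < eps -> exists delta, 0 < delta /\
    forall q, dT2 q p < delta -> dT2 (F q) (F p) < eps.

Definition torus_surjective (F : R * R -> R * R) : Prop :=
  forall q, exists p, eqT2 (F p) q.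

Definition irrational (a : R) : Prop :=
  forall p q : Z, q <> 0%Z -> a <> IZR p / IZR q.
Definition rational (a : R) : Prop :=
  exists p q : Z, q <> 0%Z /\ a = IZR p / IZR q.

Definition continuous_on_interval (f : R -> R) (a b : R) : Prop :=
  forall x, a <= x <= b -> forall eps, 0 < eps -> exists delta, 0 < delta /\
    forall z, a <= z <= b -> Rabs (z - x) < delta -> Rabs (f z - f x) < eps.

(** * The skew product S(x,y) = (x + al, y + r x) and its iterates *)

(* ssum al r n x = sum_{k=0}^{n-1} r (x + k al), so sigma^n_x(y) = y + ssum al r n x *)
Fixpoint ssum (al : R) (r : R -> R) (n : nat) (x : R) : R :=
  match n with
  | O => 0
  | S n' => ssum al r n' x + r (x + INR n' * al)
  end.

Fixpoint ssum_neg (al : R) (r : R -> R) (n : nat) (x : R) : R :=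
  match n with
  | O => 0
  | S n' => ssum_neg al r n' x + r (x - INR (S n') * al)
  end.

Definition S_iter (al : R) (r : R -> R) (m : Z) (p : R * R) : R * R :=
  match m with
  | Z0 => p
  | Zpos q => let n := Pos.to_nat q in
              (fst p + INR n * al, snd p + ssum al r n (fst p))
  | Zneg q => let n := Pos.to_nat q in
              (fst p - INR n * al, snd p - ssum_neg al r n (fst p))
  end.

Definition S_minimal (al : R) (r : R -> R) : Prop :=
  forall p q eps, 0 < eps -> exists m : Z, dT2 (S_iter al r m p) q < eps.

(** * Measures evaluated on arcs.
    arc a L (0 <= L <= 1) is the image in T^1 of the real interval [a, a+L]. *)

Definition ilen (a b c d : R) : R := Rmax 0 (Rmin b d - Rmax a c).

(* Lebesgue measure of (arc a L) ∩ (arc c M), for 0 <= L, M <= 1 *)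
Definition arc_overlap (a L c M : R) : R :=
  let a' := frac a in let c' := frac c in
  ilen a' (a' + L) (c' - 2) (c' - 2 + M) +
  ilen a' (a' + L) (c' - 1) (c' - 1 + M) +
  ilen a' (a' + L) c' (c' + M) +
  ilen a' (a' + L) (c' + 1) (c' + 1 + M) +
  ilen a' (a' + L) (c' + 2) (c' + 2 + M).

Definition dirac (y a L : R) : R :=
  if Rle_dec (frac (y - a)) L then 1 else 0.

Definition mu0 (x1 y1 xb1 xb2 : R) (psi phi : R -> R) (x a L : R) : R :=
  let u := frac x in
  match Rlt_dec xb1 u, Rlt_dec u xb2 with
  | left _, left _ =>
      if Req_EM_T u x1 then dirac y1 a L
      else arc_overlap a L (Rmin (psi u) (phi u)) (Rabs (phi u - psi u))
           / Rabs (phi u - psi u)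
  | _, _ =>
    match Rlt_dec (xb1 + /2) u, Rlt_dec u (xb2 + /2) with
    | left _, left _ =>
        let w := u - /2 in
        if Req_EM_T w x1 then dirac (1 - y1) a L
        else (* mu^0_w of the reflected arc {1 - y : y in arc a L} = arc (1-a-L) L *)
          arc_overlap (1 - a - L) L (Rmin (psi w) (phi w)) (Rabs (phi w - psi w))
           / Rabs (phi w - psi w)
    | _, _ => L  (* Lebesgue measure *)
    end
  end.

(* mu^n_x [0, L] = mu^0_{R^n x} (sigma^n_x [0,L]) *)
Definition mun (al : R) (r : R -> R) (x1 y1 xb1 xb2 : R) (psi phi : R -> R)
  (n : nat) (x L : R) : R :=
  mu0 x1 y1 xb1 xb2 psi phi (x + INR n * al) (ssum al r n x) L.

Definition series_sum (f : nat -> R) : R :=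
  epsilon (inhabits 0) (fun l => infinite_sum f l).

Definition mu (al : R) (r : R -> R) (x1 y1 xb1 xb2 : R) (psi phi : R -> R)
  (x L : R) : R :=
  / 2 * (L + series_sum (fun n => (/ 2) ^ (n + 1) * mun al r x1 y1 xb1 xb2 psi phi n x L)).

Definition tau (al : R) (r : R -> R) (x1 y1 xb1 xb2 : R) (psi phi : R -> R)
  (x y : R) : R :=
  epsilon (inhabits 0) (fun y' => (0 <= y' <= 1) /\
    y <= mu al r x1 y1 xb1 xb2 psi phi x y' /\
    forall y'', 0 <= y'' <= 1 -> y <= mu al r x1 y1 xb1 xb2 psi phi x y'' -> y' <= y'').

Definition Tmap (al : R) (r : R -> R) (x1 y1 xb1 xb2 : R) (psi phi : R -> R)
  (p : R * R) : R * R :=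
  (fst p, tau al r x1 y1 xb1 xb2 psi phi (fst p) (frac (snd p))).

Definition Pmap (p : R * R) : R * R := (fst p + / 2, 1 - snd p).

Definition inOminus (al x1 x : R) : Prop :=
  exists j : nat, eqT1 x (x1 - INR j * al) \/ eqT1 x (x1 + / 2 - INR j * al).

(* Main.v *)
Require Import Defs.
From Coquelicot Require Import Coquelicot.
From Stdlib Require Import Reals Lra Lia ZArith ClassicalEpsilon Classical FunctionalExtensionality PropExtensionality.
Open Scope R_scope.

Lemma Ip_spec r : IZR (Int_part r) <= r < IZR (Int_part r) + 1.
Proof. destruct (base_Int_part r); lra. Qed.

Lemma Ip_unique r z : IZR z <= r < IZR z + 1 -> Int_part r = z.
Proof.
  intros [H1 H2]. unfold Int_part.
  assert (E : (z + 1)%Z = up r).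
  { apply tech_up; rewrite plus_IZR; simpl; lra. }
  lia.
Qed.

Lemma frac_range r : 0 <= frac r < 1.
Proof. unfold frac; destruct (Ip_spec r); lra. Qed.

Lemma frac_eq r : r = IZR (Int_part r) + frac r.
Proof. unfold frac; ring. Qed.

Lemma Ip_shift r k : Int_part (r + IZR k) = (Int_part r + k)%Z.
Proof. apply Ip_unique; rewrite plus_IZR; destruct (Ip_spec r); lra. Qed.

Lemma frac_shift r k : frac (r + IZR k) = frac r.
Proof. unfold frac; rewrite Ip_shift, plus_IZR; ring. Qed.

Lemma frac_id r : 0 <= r < 1 -> frac r = r.
Proof. intro H; unfold frac; rewrite (Ip_unique r 0); [simpl; ring| simpl; lra]. Qed.

Lemma frac_char r z f : r = IZR z + f -> 0 <= f < 1 -> frac r = f.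
Proof. intros -> Hf. rewrite Rplus_comm, frac_shift. now apply frac_id. Qed.

Lemma Ip_char r z f : r = IZR z + f -> 0 <= f < 1 -> Int_part r = z.
Proof. intros -> Hf. apply Ip_unique; lra. Qed.

Lemma eqT1_frac u v : eqT1 u v -> frac u = frac v.
Proof. intros [k ->]. apply frac_shift. Qed.

Lemma eqT1_refl u : eqT1 u u.
Proof. exists 0%Z; simpl; ring. Qed.
Lemma eqT1_sym u v : eqT1 u v -> eqT1 v u.
Proof. intros [k H]; exists (-k)%Z; rewrite opp_IZR; lra. Qed.
Lemma eqT1_trans u v w : eqT1 u v -> eqT1 v w -> eqT1 u w.
Proof. intros [k H] [l H']; exists (k+l)%Z; rewrite plus_IZR; lra. Qed.
Lemma eqT1_of_frac u v : frac u = frac v -> eqT1 u v.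
Proof. intro H; exists (Int_part u - Int_part v)%Z; rewrite minus_IZR.
  rewrite (frac_eq u) at 1; rewrite (frac_eq v) at 1; rewrite H; ring. Qed.
Lemma eqT1_frac_self u : eqT1 u (frac u).
Proof. exists (Int_part u); unfold frac; ring. Qed.

Definition Hn (M w : R) : R := M * IZR (Int_part w) + Rmin (frac w) M.
Definition Hf (c M z : R) : R := Hn M (z - c).

Lemma Hn_shift M w k : Hn M (w + IZR k) = Hn M w + IZR k * M.
Proof. unfold Hn. rewrite Ip_shift, frac_shift, plus_IZR. ring. Qed.

Lemma Hn_step M w d : 0 <= M <= 1 -> 0 <= d <= 1 ->
  0 <= Hn M (w + d) - Hn M w <= Rmin d M.
Proof.
  intros HM Hd. unfold Hn.
  pose proof (frac_range w) as Hf. pose proof (frac_eq w) as Ew.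
  set (n := Int_part w) in *. set (f := frac w) in *.
  destruct (Rlt_dec (f + d) 1) as [H|H].
  - rewrite (Ip_char (w + d) n (f + d)) by lra.
    rewrite (frac_char (w + d) n (f + d)) by lra.
    unfold Rmin; repeat destruct Rle_dec; lra.
  - rewrite (Ip_char (w + d) (n + 1) (f + d - 1)) by (try rewrite plus_IZR; simpl; lra).
    rewrite (frac_char (w + d) (n + 1) (f + d - 1)) by (try rewrite plus_IZR; simpl; lra).
    rewrite plus_IZR; simpl.
    unfold Rmin; repeat destruct Rle_dec; lra.
Qed.

Lemma Hn_mono M w w' : 0 <= M <= 1 -> w <= w' -> Hn M w <= Hn M w'.
Proof.
  intros HM Hw.
  (* reduce to steps of size <= 1 via integer part of w' - w *)
  assert (forall n : nat, forall w w', w <= w' <= w + INR n -> Hn M w <= Hn M w').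
  { induction n as [|n IH]; intros v v' Hv.
    - simpl in Hv. replace v' with (v + 0) by lra.
      pose proof (Hn_step M v 0 HM ltac:(lra)); lra.
    - rewrite S_INR in Hv.
      destruct (Rle_dec v' (v + 1)).
      + replace v' with (v + (v' - v)) by ring.
        pose proof (Hn_step M v (v' - v) HM ltac:(lra)); lra.
      + pose proof (Hn_step M v 1 HM ltac:(lra)).
        pose proof (IH (v + 1) v' ltac:(lra)). lra. }
  destruct (INR_unbounded (w' - w)) as [n Hn'].
  apply (H n); lra.
Qed.

Lemma Hn_refl M w : 0 <= M <= 1 -> Hn M (M - w) + Hn M w = M.
Proof.
  intros HM. unfold Hn.
  pose proof (frac_range w) as Hf. pose proof (frac_eq w) as Ew.
  set (n := Int_part w) in *. set (f := frac w) in *.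
  destruct (Rle_dec f M) as [H1|H1].
  - destruct (Rlt_dec (M - f) 1) as [H2|H2].
    + rewrite (Ip_char (M - w) (-n) (M - f)) by (try rewrite opp_IZR; lra).
      rewrite (frac_char (M - w) (-n) (M - f)) by (try rewrite opp_IZR; lra).
      rewrite opp_IZR. unfold Rmin; repeat destruct Rle_dec; lra.
    + rewrite (Ip_char (M - w) (1 - n) 0) by (try rewrite minus_IZR; simpl; lra).
      rewrite (frac_char (M - w) (1 - n) 0) by (try rewrite minus_IZR; simpl; lra).
      rewrite minus_IZR; simpl. unfold Rmin; repeat destruct Rle_dec; lra.
  - rewrite (Ip_char (M - w) (- n - 1) (M - f + 1)) by (try rewrite minus_IZR, opp_IZR; simpl; lra).
    rewrite (frac_char (M - w) (- n - 1) (M - f + 1)) by (try rewrite minus_IZR, opp_IZR; simpl; lra).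
    rewrite minus_IZR, opp_IZR; simpl. unfold Rmin; repeat destruct Rle_dec; lra.
Qed.

Lemma Hn_z M w : Hn M w = M * IZR (Int_part w) + Rmin (frac w) M.
Proof. reflexivity. Qed.

Lemma ov_core w L M : -1 < w < 1 -> 0 <= L <= 1 -> 0 <= M <= 1 ->
  Rmax 0 (Rmin (w + L) (-2 + M) - Rmax w (-2)) +
  Rmax 0 (Rmin (w + L) (-1 + M) - Rmax w (-1)) +
  Rmax 0 (Rmin (w + L) (0 + M) - Rmax w 0) +
  Rmax 0 (Rmin (w + L) (1 + M) - Rmax w 1) +
  Rmax 0 (Rmin (w + L) (2 + M) - Rmax w 2) = Hn M (w + L) - Hn M w.
Proof.
  intros Hw HL HM.
  assert (E2 : Rmax 0 (Rmin (w + L) (-2 + M) - Rmax w (-2)) = 0).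
  { unfold Rmax, Rmin; repeat destruct Rle_dec; lra. }
  assert (E3 : Rmax 0 (Rmin (w + L) (2 + M) - Rmax w 2) = 0).
  { unfold Rmax, Rmin; repeat destruct Rle_dec; lra. }
  rewrite E2, E3. unfold Hn.
  destruct (Rlt_dec w 0).
  - rewrite (Ip_char w (-1) (w + 1)) by (simpl; lra).
    rewrite (frac_char w (-1) (w + 1)) by (simpl; lra).
    destruct (Rlt_dec (w + L) 0).
    + rewrite (Ip_char (w+L) (-1) (w + L + 1)) by (simpl; lra).
      rewrite (frac_char (w+L) (-1) (w + L + 1)) by (simpl; lra).
      simpl. unfold Rmax, Rmin; repeat destruct Rle_dec; lra.
    + rewrite (Ip_char (w+L) 0 (w + L)) by (simpl; lra).
      rewrite (frac_char (w+L) 0 (w + L)) by (simpl; lra).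
      simpl. unfold Rmax, Rmin; repeat destruct Rle_dec; lra.
  - rewrite (Ip_char w 0 w) by (simpl; lra).
    rewrite (frac_char w 0 w) by (simpl; lra).
    destruct (Rlt_dec (w + L) 1).
    + rewrite (Ip_char (w+L) 0 (w + L)) by (simpl; lra).
      rewrite (frac_char (w+L) 0 (w + L)) by (simpl; lra).
      simpl. unfold Rmax, Rmin; repeat destruct Rle_dec; lra.
    + rewrite (Ip_char (w+L) 1 (w + L - 1)) by (simpl; lra).
      rewrite (frac_char (w+L) 1 (w + L - 1)) by (simpl; lra).
      simpl. unfold Rmax, Rmin; repeat destruct Rle_dec; lra.
Qed.

Lemma ilen_shift a L c k M :
  ilen a (a + L) (c + k) (c + k + M) =
  Rmax 0 (Rmin ((a - c) + L) (k + M) - Rmax (a - c) k).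
Proof.
  unfold ilen. f_equal.
  replace (Rmin (a + L) (c + k + M) - Rmax a (c + k)) with
    ((c + Rmin (a - c + L) (k + M)) - (c + Rmax (a - c) k)); [ring|].
  unfold Rmin, Rmax; repeat destruct Rle_dec; lra.
Qed.

Lemma arc_overlap_Hf0 a L c M : 0 <= L <= 1 -> 0 <= M <= 1 ->
  arc_overlap a L c M = Hf (frac c) M (frac a + L) - Hf (frac c) M (frac a).
Proof.
  intros HL HM. unfold arc_overlap, Hf.
  pose proof (frac_range a). pose proof (frac_range c).
  set (a' := frac a). set (c' := frac c).
  assert (Hk : forall k, ilen a' (a' + L) (c' + k) (c' + k + M) =
     Rmax 0 (Rmin ((a' - c') + L) (k + M) - Rmax (a' - c') k)) by (intro; apply ilen_shift).
  replace (a' + L - c') with ((a' - c') + L) by ring.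
  rewrite <- (ov_core (a' - c') L M) by (unfold a', c' in *; lra).
  rewrite <- !Hk.
  replace (c' - 2) with (c' + -2) by ring.
  replace (c' - 1) with (c' + -1) by ring.
  replace (c' + 0) with c' by ring.
  reflexivity.
Qed.

Lemma Hf_diff_inv c c' M z z' L : 0 <= M <= 1 -> eqT1 c c' -> eqT1 z z' ->
  Hf c M (z + L) - Hf c M z = Hf c' M (z' + L) - Hf c' M z'.
Proof.
  intros HM [k Hk] [l Hl]. unfold Hf. subst.
  replace (z' + IZR l + L - (c' + IZR k)) with ((z' + L - c') + IZR (l - k)) by (rewrite minus_IZR; ring).
  replace (z' + IZR l - (c' + IZR k)) with ((z' - c') + IZR (l - k)) by (rewrite minus_IZR; ring).
  rewrite !Hn_shift. ring.
Qed.

Lemma arc_overlap_Hf a L c M : 0 <= L <= 1 -> 0 <= M <= 1 ->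
  arc_overlap a L c M = Hf c M (a + L) - Hf c M a.
Proof.
  intros HL HM. rewrite arc_overlap_Hf0 by auto.
  apply Hf_diff_inv; auto; apply eqT1_sym, eqT1_frac_self.
Qed.

Definition Gm (al be a L : R) : R :=
  if Rlt_dec 0 be then (Hf al be (a + L) - Hf al be a) / be else dirac al a L.

Definition NA (al be a : R) : Prop := 0 < be \/ frac (al - a) <> 0.

Lemma frac_sub_shift u a x : frac (u - (a + x)) = frac (frac (u - a) - x).
Proof.
  replace (u - (a + x)) with ((frac (u - a) - x) + IZR (Int_part (u - a))) by (unfold frac; ring).
  apply frac_shift.
Qed.

Lemma frac_minus f x : 0 <= f < 1 -> 0 <= x <= 1 ->
  (x <= f -> frac (f - x) = f - x) /\ (f < x -> frac (f - x) = f - x + 1).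
Proof.
  intros Hf Hx; split; intro H.
  - apply frac_id; lra.
  - apply (frac_char _ (-1) (f - x + 1)); [simpl; ring | lra].
Qed.

Lemma Hn_in M g L : 0 < M <= 1 -> 0 <= g < 1 -> g + M <= L <= 1 ->
  Hn M (L - g) - Hn M (- g) = M.
Proof.
  intros HM Hg HL. unfold Hn.
  assert (E1 : Hn M (-g) = 0).
  { unfold Hn. destruct (Req_dec g 0) as [->|Hg0].
    - replace (-0) with (0 + IZR 0) by (simpl; ring).
      rewrite Ip_shift, frac_shift, (Ip_char 0 0 0), (frac_char 0 0 0) by (simpl; lra).
      simpl. unfold Rmin; destruct Rle_dec; lra.
    - rewrite (Ip_char (-g) (-1) (1 - g)), (frac_char (-g) (-1) (1 - g)) by (simpl; lra).
      simpl. unfold Rmin; destruct Rle_dec; lra. }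
  unfold Hn in E1. rewrite E1.
  destruct (Rlt_dec (L - g) 1).
  - rewrite (Ip_char (L - g) 0 (L - g)), (frac_char (L - g) 0 (L - g)) by (simpl; lra).
    simpl. unfold Rmin; destruct Rle_dec; lra.
  - rewrite (Ip_char (L - g) 1 0), (frac_char (L - g) 1 0) by (simpl; lra).
    simpl. unfold Rmin; destruct Rle_dec; lra.
Qed.

Lemma Hn_out M g L : 0 < M <= 1 -> L < g < 1 -> 0 <= L -> g + M <= 1 ->
  Hn M (L - g) - Hn M (- g) = 0.
Proof.
  intros HM Hg HL HgM. unfold Hn.
  rewrite (Ip_char (-g) (-1) (1 - g)), (frac_char (-g) (-1) (1 - g)) by (simpl; lra).
  rewrite (Ip_char (L - g) (-1) (1 + L - g)), (frac_char (L - g) (-1) (1 + L - g)) by (simpl; lra).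
  simpl. unfold Rmin; repeat destruct Rle_dec; lra.
Qed.

Lemma Gm_norm al be a L : Gm al be a L = Gm (frac (al - a)) be 0 L.
Proof.
  unfold Gm. destruct Rlt_dec.
  - f_equal. unfold Hf.
    replace (a + L - al) with ((0 + L - frac (al - a)) + IZR (- Int_part (al - a)))
      by (rewrite opp_IZR; unfold frac; ring).
    replace (a - al) with ((0 - frac (al - a)) + IZR (- Int_part (al - a)))
      by (rewrite opp_IZR; unfold frac; ring).
    rewrite !Hn_shift. ring.
  - unfold dirac. replace (frac (al - a) - 0) with (frac (al - a)) by ring.
    rewrite (frac_id (frac (al - a))) by apply frac_range. reflexivity.
Qed.

Lemma Gm_in al be a L : 0 <= be <= 1 -> frac (al - a) + be <= L <= 1 -> Gm al be a L = 1.
Proof.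
  intros Hb HL. rewrite Gm_norm. pose proof (frac_range (al - a)).
  set (g := frac (al - a)) in *. unfold Gm. destruct Rlt_dec.
  - unfold Hf. replace (0 + L - g) with (L - g) by ring. replace (0 - g) with (- g) by ring.
    rewrite Hn_in by lra. field. lra.
  - unfold dirac. rewrite Rminus_0_r, frac_id by lra. destruct Rle_dec; lra.
Qed.

Lemma Gm_out al be a L : 0 <= be <= 1 -> 0 <= L -> L < frac (al - a) ->
  frac (al - a) + be <= 1 -> Gm al be a L = 0.
Proof.
  intros Hb HL H1 H2. rewrite Gm_norm. pose proof (frac_range (al - a)).
  set (g := frac (al - a)) in *. unfold Gm. destruct Rlt_dec.
  - unfold Hf. replace (0 + L - g) with (L - g) by ring. replace (0 - g) with (- g) by ring.
    rewrite Hn_out by lra. field. lra.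
  - unfold dirac. rewrite Rminus_0_r, frac_id by lra. destruct Rle_dec; lra.
Qed.

Lemma Gm_pos al be a L : 0 < be -> Gm al be a L = (Hn be (a - al + L) - Hn be (a - al)) / be.
Proof. intro H. unfold Gm, Hf. destruct Rlt_dec; [|lra]. do 3 f_equal; ring. Qed.

Lemma Gm_dirac al be a L : ~ 0 < be -> Gm al be a L = if Rle_dec (frac (al - a)) L then 1 else 0.
Proof. intro H. unfold Gm. destruct Rlt_dec; [lra|]. reflexivity. Qed.

Lemma Gm_range al be a L : 0 <= be <= 1 -> 0 <= L <= 1 -> 0 <= Gm al be a L <= 1.
Proof.
  intros Hb HL. destruct (Rlt_dec 0 be).
  - rewrite Gm_pos by auto. pose proof (Hn_step be (a - al) L ltac:(lra) HL).
    assert (Rmin L be <= be) by apply Rmin_r.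
    split; [apply Rmult_le_pos; [lra| left; apply Rinv_0_lt_compat; lra]|].
    apply (Rmult_le_reg_r be); [lra|]. unfold Rdiv. rewrite Rmult_assoc, Rinv_l; lra.
  - rewrite Gm_dirac by auto. destruct Rle_dec; lra.
Qed.

Lemma Gm_mono al be a L L' : 0 <= be <= 1 -> 0 <= L -> L <= L' -> L' <= 1 ->
  Gm al be a L <= Gm al be a L'.
Proof.
  intros Hb H1 H2 H3. destruct (Rlt_dec 0 be).
  - rewrite !Gm_pos by auto. unfold Rdiv. apply Rmult_le_compat_r; [left; apply Rinv_0_lt_compat; lra|].
    pose proof (Hn_mono be (a - al + L) (a - al + L') ltac:(lra) ltac:(lra)). lra.
  - rewrite !Gm_dirac by auto. repeat destruct Rle_dec; lra.
Qed.

Lemma Gm_one al be a : 0 <= be <= 1 -> Gm al be a 1 = 1.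
Proof.
  intros Hb. destruct (Rlt_dec 0 be).
  - rewrite Gm_pos by auto. replace 1 with (IZR 1) at 1 by reflexivity.
    rewrite Hn_shift. simpl. field. lra.
  - rewrite Gm_dirac by auto. pose proof (frac_range (al - a)). destruct Rle_dec; lra.
Qed.

Lemma Gm_zero al be a : 0 <= be <= 1 -> NA al be a -> Gm al be a 0 = 0.
Proof.
  intros Hb [H|H].
  - rewrite Gm_pos by auto. rewrite Rplus_0_r. field; lra.
  - destruct (Rlt_dec 0 be).
    + rewrite Gm_pos by auto. rewrite Rplus_0_r. field; lra.
    + rewrite Gm_dirac by auto. pose proof (frac_range (al - a)). destruct Rle_dec; lra.
Qed.

Lemma Gm_eqT1 al al' be a a' L : eqT1 al al' -> eqT1 a a' -> Gm al be a L = Gm al' be a' L.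
Proof.
  intros [k Hk] [l Hl]. rewrite (Gm_norm al), (Gm_norm al'). f_equal.
  subst. replace (al' + IZR k - (a' + IZR l)) with ((al' - a') + IZR (k - l)) by (rewrite minus_IZR; ring).
  apply frac_shift.
Qed.

Lemma Gm_cover al be a L : 0 <= be <= 1 -> 0 <= L <= 1 ->
  1 <= Gm al be a L + Gm al be (a + L) (1 - L).
Proof.
  intros Hb HL. destruct (Rlt_dec 0 be).
  - rewrite !Gm_pos by auto.
    replace (a + L - al + (1 - L)) with ((a - al) + IZR 1) by (simpl; ring).
    rewrite Hn_shift. replace (a + L - al) with (a - al + L) by ring. simpl.
    apply Req_le. field. lra.
  - rewrite !Gm_dirac by auto. rewrite frac_sub_shift.
    pose proof (frac_range (al - a)). set (f := frac (al - a)) in *.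
    destruct (frac_minus f L H ltac:(lra)) as [E1 E2].
    destruct (Rle_dec f L); [destruct Rle_dec; lra|].
    rewrite E1 by lra. destruct Rle_dec; lra.
Qed.

Lemma Gm_disj al be a t m1 m2 t2 : 0 <= be <= 1 -> NA al be a ->
  0 <= t -> t < m1 -> m1 < m2 -> m2 < t2 -> t2 <= 1 ->
  Gm al be a t + Gm al be (a + m1) (m2 - m1) + Gm al be (a + t2) (1 - t2) <= 1.
Proof.
  intros Hb HNA H1 H2 H3 H4 H5. destruct (Rlt_dec 0 be).
  - rewrite !Gm_pos by auto.
    replace (a + m1 - al + (m2 - m1)) with (a - al + m2) by ring.
    replace (a + t2 - al + (1 - t2)) with ((a - al) + IZR 1) by (simpl; ring).
    rewrite Hn_shift. simpl.
    replace (a + m1 - al) with (a - al + m1) by ring.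
    replace (a + t2 - al) with (a - al + t2) by ring.
    pose proof (Hn_mono be (a - al + t) (a - al + m1) ltac:(lra) ltac:(lra)).
    pose proof (Hn_mono be (a - al + m2) (a - al + t2) ltac:(lra) ltac:(lra)).
    apply (Rmult_le_reg_r be); [lra|].
    replace ((Hn be (a - al + t) - Hn be (a - al)) / be + (Hn be (a - al + m2) - Hn be (a - al + m1)) / be +
     (Hn be (a - al) + 1 * be - Hn be (a - al + t2)) / be) with
     (((Hn be (a - al + t) - Hn be (a - al)) + (Hn be (a - al + m2) - Hn be (a - al + m1)) +
     (Hn be (a - al) + 1 * be - Hn be (a - al + t2))) / be) by (field; lra).
    unfold Rdiv. rewrite Rmult_assoc, Rinv_l; lra.
  - destruct HNA as [|HNA]; [lra|].
    rewrite !Gm_dirac by auto. rewrite !frac_sub_shift.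
    pose proof (frac_range (al - a)). set (f := frac (al - a)) in *.
    destruct (frac_minus f m1 H ltac:(lra)) as [E1 E2].
    destruct (frac_minus f t2 H ltac:(lra)) as [E3 E4].
    destruct (Rle_dec m1 f).
    + rewrite E1 by lra. destruct (Rle_dec t2 f).
      * rewrite E3 by lra. repeat destruct Rle_dec; lra.
      * rewrite E4 by lra. repeat destruct Rle_dec; lra.
    + rewrite E2 by lra. rewrite E4 by lra. repeat destruct Rle_dec; lra.
Qed.

Lemma Gm_refl al be a L : 0 <= be <= 1 -> 0 <= L <= 1 ->
  Gm (1 - al - be) be (- a) L = Gm al be (a - L) L.
Proof.
  intros Hb HL. destruct (Rlt_dec 0 be).
  - rewrite !Gm_pos by auto.
    replace (- a - (1 - al - be) + L) with ((be - (a - al - L)) + IZR (-1)) by (simpl; ring).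
    replace (- a - (1 - al - be)) with ((be - (a - al)) + IZR (-1)) by (simpl; ring).
    rewrite !Hn_shift.
    pose proof (Hn_refl be (a - al - L) ltac:(lra)).
    pose proof (Hn_refl be (a - al) ltac:(lra)).
    replace (a - L - al + L) with (a - al) by ring.
    replace (a - L - al) with (a - al - L) by ring.
    f_equal. lra.
  - rewrite !Gm_dirac by auto.
    pose proof (frac_range (al - a)). pose proof (frac_eq (al - a)).
    set (f := frac (al - a)) in *. set (k0 := Int_part (al - a)) in *.
    replace (al - (a - L)) with ((f + L) + IZR k0) by lra. rewrite frac_shift.
    replace (1 - al - be - - a) with ((1 - f) + IZR (- k0)) by (rewrite opp_IZR; lra).
    rewrite frac_shift.
    destruct (Req_dec f 0) as [E|E].
    + rewrite E. replace (1 - 0) with (0 + IZR 1) by (simpl; ring). rewrite frac_shift, frac_id by lra.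
      replace (0 + L) with L by ring.
      destruct (Rlt_dec L 1).
      * rewrite frac_id by lra. repeat destruct Rle_dec; lra.
      * replace L with 1 by lra. rewrite (frac_char 1 1 0) by (simpl; lra).
        repeat destruct Rle_dec; lra.
    + rewrite (frac_id (1 - f)) by lra.
      destruct (Rlt_dec (f + L) 1).
      * rewrite frac_id by lra. repeat destruct Rle_dec; lra.
      * rewrite (frac_char (f + L) 1 (f + L - 1)) by (simpl; lra). repeat destruct Rle_dec; lra.
Qed.

Lemma Gm_lip al be a L L' : 0 < be <= 1 -> 0 <= L -> L <= L' -> L' <= 1 ->
  Gm al be a L' - Gm al be a L <= (L' - L) / be.
Proof.
  intros Hb H1 H2 H3. rewrite !Gm_pos by lra.
  pose proof (Hn_step be (a - al + L) (L' - L) ltac:(lra) ltac:(lra)).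
  replace (a - al + L + (L' - L)) with (a - al + L') in H by ring.
  assert (Rmin (L' - L) be <= L' - L) by apply Rmin_l.
  replace ((Hn be (a - al + L') - Hn be (a - al)) / be - (Hn be (a - al + L) - Hn be (a - al)) / be)
    with ((Hn be (a - al + L') - Hn be (a - al + L)) / be) by (field; lra).
  unfold Rdiv. apply Rmult_le_compat_r; [left; apply Rinv_0_lt_compat; lra| lra].
Qed.

Lemma Gm_rc al be a L e : 0 <= be <= 1 -> 0 <= L < 1 -> 0 < e ->
  exists d, 0 < d /\ forall L', L <= L' < L + d -> L' <= 1 -> Gm al be a L' <= Gm al be a L + e.
Proof.
  intros Hb HL He. destruct (Rlt_dec 0 be).
  - exists (e * be). split; [apply Rmult_lt_0_compat; lra|].
    intros L' H1 H2. pose proof (Gm_lip al be a L L' ltac:(lra) ltac:(lra) ltac:(lra) H2).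
    assert ((L' - L) / be <= e).
    { apply (Rmult_le_reg_r be); [lra|]. unfold Rdiv. rewrite Rmult_assoc, Rinv_l; lra. }
    lra.
  - destruct (Rle_dec (frac (al - a)) L).
    + exists 1. split; [lra|]. intros L' H1 H2.
      rewrite (Gm_dirac _ _ _ L) by auto. destruct Rle_dec; [|lra].
      pose proof (Gm_range al be a L' ltac:(lra) ltac:(lra)). lra.
    + exists (frac (al - a) - L). split; [lra|]. intros L' H1 H2.
      rewrite !Gm_dirac by auto. repeat destruct Rle_dec; lra.
Qed.

Lemma Gm_lcont al be a L e : 0 < be <= 1 -> 0 <= L <= 1 -> 0 < e ->
  exists d, 0 < d /\ forall L', 0 <= L' <= 1 -> Rabs (L' - L) < d ->
     Rabs (Gm al be a L' - Gm al be a L) <= e.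
Proof.
  intros Hb HL He. exists (e * be). split; [apply Rmult_lt_0_compat; lra|].
  intros L' H1 H2.
  assert (K : forall u v, 0 <= u -> u <= v -> v <= 1 -> v - u < e * be ->
             Gm al be a v - Gm al be a u <= e).
  { intros u v Hu Huv Hv Hd. pose proof (Gm_lip al be a u v Hb Hu Huv Hv).
    assert ((v - u) / be <= e).
    { apply (Rmult_le_reg_r be); [lra|]. unfold Rdiv. rewrite Rmult_assoc, Rinv_l; lra. }
    lra. }
  destruct (Rle_dec L L').
  - rewrite Rabs_right in H2 by lra.
    pose proof (Gm_mono al be a L L' ltac:(lra) ltac:(lra) r ltac:(lra)).
    pose proof (K L L' ltac:(lra) r ltac:(lra) ltac:(lra)).
    rewrite Rabs_right; lra.
  - rewrite Rabs_left in H2 by lra.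
    pose proof (Gm_mono al be a L' L ltac:(lra) ltac:(lra) ltac:(lra) ltac:(lra)).
    pose proof (K L' L ltac:(lra) ltac:(lra) ltac:(lra) ltac:(lra)).
    rewrite Rabs_left1; lra.
Qed.

Lemma abs_le x c : -c <= x <= c -> Rabs x <= c.
Proof. intros; unfold Rabs; destruct Rcase_abs; lra. Qed.
Lemma abs_le_inv x c : Rabs x <= c -> -c <= x <= c.
Proof. unfold Rabs; destruct Rcase_abs; lra. Qed.
Lemma abs_lt_inv x c : Rabs x < c -> -c < x < c.
Proof. unfold Rabs; destruct Rcase_abs; lra. Qed.
Lemma abs_lt x c : -c < x < c -> Rabs x < c.
Proof. intros; unfold Rabs; destruct Rcase_abs; lra. Qed.
Lemma abs_ge0 x : 0 <= Rabs x.
Proof. unfold Rabs; destruct Rcase_abs; lra. Qed.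
Lemma abs_ge x : x <= Rabs x /\ - x <= Rabs x.
Proof. unfold Rabs; destruct Rcase_abs; lra. Qed.

Lemma Ip_bound w : Rabs (IZR (Int_part w)) <= Rabs w + 1.
Proof. pose proof (Ip_spec w). pose proof (abs_ge w). apply abs_le. lra. Qed.

Lemma Hn_M_lip M M' w : 0 <= M -> 0 <= M' ->
  Rabs (Hn M w - Hn M' w) <= Rabs (M - M') * (Rabs w + 2).
Proof.
  intros HM HM'. unfold Hn.
  pose proof (Ip_bound w). set (n := IZR (Int_part w)) in *.
  assert (E : Rabs (Rmin (frac w) M - Rmin (frac w) M') <= Rabs (M - M')).
  { unfold Rmin; repeat destruct Rle_dec; pose proof (abs_ge (M - M'));
    apply abs_le; lra. }
  replace (M * n + Rmin (frac w) M - (M' * n + Rmin (frac w) M')) with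
    ((M - M') * n + (Rmin (frac w) M - Rmin (frac w) M')) by ring.
  eapply Rle_trans; [apply Rabs_triang|]. rewrite Rabs_mult.
  pose proof (abs_ge0 (M - M')). pose proof (abs_ge0 n).
  assert (Rabs (M - M') * Rabs n <= Rabs (M - M') * (Rabs w + 1)) by (apply Rmult_le_compat_l; lra).
  lra.
Qed.

Lemma Hn_w_lip M w w' : 0 <= M <= 1 -> Rabs (w' - w) <= 1 ->
  Rabs (Hn M w' - Hn M w) <= Rabs (w' - w).
Proof.
  intros HM H. apply abs_le_inv in H.
  destruct (Rle_dec w w').
  - pose proof (Hn_step M w (w' - w) HM ltac:(lra)). replace (w + (w' - w)) with w' in H0 by ring.
    pose proof (Rmin_l (w' - w) M). rewrite (Rabs_right (w' - w)) by lra. apply abs_le; lra.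
  - pose proof (Hn_step M w' (w - w') HM ltac:(lra)). replace (w' + (w - w')) with w in H0 by ring.
    pose proof (Rmin_l (w - w') M). rewrite (Rabs_left (w' - w)) by lra. apply abs_le; lra.
Qed.

Lemma Gm_pcont al be a L e : 0 < be <= 1 -> 0 <= L <= 1 -> 0 < e ->
  exists g, 0 < g /\ forall al' be' a', Rabs (al' - al) < g -> Rabs (be' - be) < g ->
    Rabs (a' - a) < g -> be' <= 1 ->
    Rabs (Gm al' be' a' L - Gm al be a L) <= e.
Proof.
  intros Hb HL He.
  set (w := a - al). set (K := 2 * Rabs w + 9).
  assert (HK : 0 < K) by (pose proof (abs_ge0 w); unfold K; lra).
  set (g := Rmin (be / 2) (e * (be * be) / (2 * (K + 1)))).
  assert (Hg1 : g <= be / 2) by apply Rmin_l.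
  assert (Hg2 : g <= e * (be * be) / (2 * (K + 1))) by apply Rmin_r.
  assert (Hg0 : 0 < g).
  { unfold g, Rmin; destruct Rle_dec; [lra|].
    apply Rdiv_lt_0_compat; [|lra]. apply Rmult_lt_0_compat; [lra|]. nra. }
  exists g. split; [exact Hg0|]. intros al' be' a' H1 H2 H3 H4.
  apply abs_lt_inv in H1, H2, H3.
  assert (Hb' : be / 2 <= be') by lra.
  set (w' := a' - al').
  assert (Hww : Rabs (w' - w) <= 2 * g) by (apply abs_le; unfold w, w'; lra).
  assert (Hww1 : Rabs (w' - w) <= 1) by lra.
  assert (Hbb : Rabs (be' - be) <= g) by (apply abs_le; lra).
  rewrite !Gm_pos by lra. fold w w'.
  set (N := Hn be (w + L) - Hn be w). set (N' := Hn be' (w' + L) - Hn be' w').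
  assert (HN : 0 <= N <= be).
  { pose proof (Hn_step be w L ltac:(lra) HL). pose proof (Rmin_r L be). unfold N; lra. }
  assert (A1 : Rabs (Hn be' (w' + L) - Hn be' (w + L)) <= 2 * g).
  { eapply Rle_trans; [apply Hn_w_lip; [lra|]|].
    - replace (w' + L - (w + L)) with (w' - w) by ring. lra.
    - replace (w' + L - (w + L)) with (w' - w) by ring. lra. }
  assert (A2 : Rabs (Hn be' (w + L) - Hn be (w + L)) <= g * (Rabs w + 3)).
  { eapply Rle_trans; [apply Hn_M_lip; lra|].
    pose proof (Rabs_triang w L). rewrite (Rabs_right L) in H by lra.
    pose proof (abs_ge0 (w + L)). pose proof (abs_ge0 (be' - be)).
    apply Rle_trans with (g * (Rabs (w + L) + 2)).
    - apply Rmult_le_compat_r; lra.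
    - apply Rmult_le_compat_l; lra. }
  assert (A3 : Rabs (Hn be' w' - Hn be' w) <= 2 * g) by (eapply Rle_trans; [apply Hn_w_lip; lra| lra]).
  assert (A4 : Rabs (Hn be' w - Hn be w) <= g * (Rabs w + 2)).
  { eapply Rle_trans; [apply Hn_M_lip; lra|]. pose proof (abs_ge0 w).
    apply Rmult_le_compat_r; lra. }
  apply abs_le_inv in A1, A2, A3, A4.
  assert (HNN : - (g * K) <= N' - N <= g * K) by (unfold N, N', K; lra).
  assert (Hkey : - (g * (K + 1)) <= N' * be - N * be' <= g * (K + 1)).
  { replace (N' * be - N * be') with ((N' - N) * be + N * (be - be')) by ring.
    apply abs_le_inv in Hbb. nra. }
  assert (Hg3 : g * (K + 1) <= e * (be * be') ).
  { apply Rle_trans with (e * (be * be) / 2).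
    - apply Rle_trans with (e * (be * be) / (2 * (K + 1)) * (K + 1)).
      + apply Rmult_le_compat_r; lra.
      + right; field; lra.
    - replace (e * (be * be) / 2) with ((e * be) * (be / 2)) by field.
      replace (e * (be * be')) with ((e * be) * be') by ring.
      apply Rmult_le_compat_l; [nra | lra]. }
  replace (N' / be' - N / be) with ((N' * be - N * be') / (be * be')) by (field; lra).
  apply abs_le. assert (Hp : 0 < be * be') by nra.
  split.
  - apply (Rmult_le_reg_r (be * be')); [lra|]. unfold Rdiv. rewrite Rmult_assoc, Rinv_l by lra. lra.
  - apply (Rmult_le_reg_r (be * be')); [lra|]. unfold Rdiv. rewrite Rmult_assoc, Rinv_l by lra. lra.
Qed.

Lemma Gm_W al be a L d e : 0 <= be <= 1 -> 0 <= L -> L + d <= 1 -> 0 < d -> 0 < e ->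
  NA al be a ->
  exists g, 0 < g /\ forall al' be' a', Rabs (al' - al) < g -> Rabs (be' - be) < g ->
    Rabs (a' - a) < g -> 0 <= be' <= 1 ->
    Gm al be a L - e <= Gm al' be' a' (L + d) /\ Gm al' be' a' L <= Gm al be a (L + d) + e.
Proof.
  intros Hb HL HLd Hd He HNA. destruct (Rlt_dec 0 be).
  - destruct (Gm_pcont al be a L e ltac:(lra) ltac:(lra) He) as [g [Hg H]].
    exists g. split; [auto|]. intros al' be' a' H1 H2 H3 H4.
    pose proof (H al' be' a' H1 H2 H3 ltac:(lra)) as HH. apply abs_le_inv in HH.
    pose proof (Gm_mono al' be' a' L (L + d) H4 HL ltac:(lra) HLd).
    pose proof (Gm_mono al be a L (L + d) Hb HL ltac:(lra) HLd).
    lra.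
  - destruct HNA as [|HNA]; [lra|].
    pose proof (frac_range (al - a)). pose proof (frac_eq (al - a)).
    set (f := frac (al - a)) in *. set (k := Int_part (al - a)) in *.
    assert (Hf0 : 0 < f) by lra.
    set (g := Rmin (Rmin (f / 2) ((1 - f) / 3)) (d / 3)).
    assert (g <= f / 2 /\ g <= (1 - f) / 3 /\ g <= d / 3) as [G1 [G2 G3]].
    { unfold g, Rmin; repeat destruct Rle_dec; lra. }
    assert (G0 : 0 < g) by (unfold g, Rmin; repeat destruct Rle_dec; lra).
    exists g. split; [auto|]. intros al' be' a' H1 H2 H3 H4.
    apply abs_lt_inv in H1, H2, H3.
    assert (Ef : frac (al' - a') = f + ((al' - al) - (a' - a))).
    { apply (frac_char (al' - a') k (f + ((al' - al) - (a' - a)))); lra. }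
    assert (Eg : Gm al be a L = if Rle_dec f L then 1 else 0) by (apply Gm_dirac; auto).
    assert (Eg' : Gm al be a (L + d) = if Rle_dec f (L + d) then 1 else 0) by (apply Gm_dirac; auto).
    pose proof (Gm_range al' be' a' L H4 ltac:(lra)).
    pose proof (Gm_range al' be' a' (L + d) H4 ltac:(lra)).
    destruct (Rle_dec f L).
    + rewrite (Gm_in al' be' a' (L + d)) by lra.
      rewrite Eg, Eg'. destruct (Rle_dec f (L + d)); lra.
    + rewrite Eg. destruct (Rle_dec f (L + d)).
      * rewrite Eg'. lra.
      * rewrite (Gm_out al' be' a' L) by lra. rewrite Eg'. lra.
Qed.

Definition PH (x1 y1 xb1 xb2 : R) (psi phi : R -> R) : Prop :=
 (0 < xb1 /\ xb1 < x1 /\ x1 < xb2 /\ xb2 < /2) /\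
 (forall x, xb1 <= x <= xb2 -> 0 <= psi x <= 1) /\ (forall x, xb1 <= x <= xb2 -> 0 <= phi x <= 1) /\
 psi xb1 = 0 /\ phi xb1 = 1 /\ psi xb2 = 1 /\ phi xb2 = 0 /\
 (forall x, xb1 <= x < x1 -> psi x < phi x) /\ (forall x, x1 < x <= xb2 -> psi x > phi x) /\
 psi x1 = phi x1 /\ eqT1 (psi x1) y1 /\
 continuous_on_interval psi xb1 xb2 /\ continuous_on_interval phi xb1 xb2.

Definition clampv (xb1 xb2 v : R) : R := Rmax xb1 (Rmin v xb2).
Definition Aone (xb1 xb2 : R) (psi phi : R -> R) (v : R) : R :=
  Rmin (psi (clampv xb1 xb2 v)) (phi (clampv xb1 xb2 v)).
Definition Bone (xb1 xb2 : R) (psi phi : R -> R) (v : R) : R :=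
  Rabs (phi (clampv xb1 xb2 v) - psi (clampv xb1 xb2 v)).
Definition Abar xb1 xb2 psi phi v :=
  Aone xb1 xb2 psi phi v + (1 - Aone xb1 xb2 psi phi (v - /2) - Bone xb1 xb2 psi phi (v - /2)).
Definition Bbar xb1 xb2 psi phi v :=
  Bone xb1 xb2 psi phi v + Bone xb1 xb2 psi phi (v - /2) - 1.
Definition alph xb1 xb2 psi phi u := Abar xb1 xb2 psi phi (frac u).
Definition bet xb1 xb2 psi phi u := Bbar xb1 xb2 psi phi (frac u).

Lemma clamp_in xb1 xb2 v : xb1 <= v <= xb2 -> clampv xb1 xb2 v = v.
Proof. intros; unfold clampv, Rmax, Rmin; repeat destruct Rle_dec; lra. Qed.
Lemma clamp_lo xb1 xb2 v : xb1 <= xb2 -> v <= xb1 -> clampv xb1 xb2 v = xb1.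
Proof. intros; unfold clampv, Rmax, Rmin; repeat destruct Rle_dec; lra. Qed.
Lemma clamp_hi xb1 xb2 v : xb1 <= xb2 -> xb2 <= v -> clampv xb1 xb2 v = xb2.
Proof. intros; unfold clampv, Rmax, Rmin; repeat destruct Rle_dec; lra. Qed.
Lemma clamp_range xb1 xb2 v : xb1 <= xb2 -> xb1 <= clampv xb1 xb2 v <= xb2.
Proof. intros; unfold clampv, Rmax, Rmin; repeat destruct Rle_dec; lra. Qed.

Lemma AB_out x1 y1 xb1 xb2 psi phi v : PH x1 y1 xb1 xb2 psi phi ->
  (v <= xb1 \/ xb2 <= v) ->
  Aone xb1 xb2 psi phi v = 0 /\ Bone xb1 xb2 psi phi v = 1.
Proof.
  intros H Hv. destruct H as [Hxb [_ [_ [Hp1 [Hf1 [Hp2 [Hf2 _]]]]]]].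
  unfold Aone, Bone. destruct Hv.
  - rewrite clamp_lo by lra. rewrite Hp1, Hf1. unfold Rmin; destruct Rle_dec; [|lra].
    rewrite Rabs_right; lra.
  - rewrite clamp_hi by lra. rewrite Hp2, Hf2. unfold Rmin; destruct Rle_dec; [lra|].
    rewrite Rabs_left; lra.
Qed.

Lemma minabs a b : Rmin a b + Rabs (b - a) = Rmax a b.
Proof. unfold Rmin, Rmax, Rabs; repeat destruct Rle_dec; destruct Rcase_abs; lra. Qed.

Lemma B1_range x1 y1 xb1 xb2 psi phi v : PH x1 y1 xb1 xb2 psi phi ->
  0 <= Bone xb1 xb2 psi phi v <= 1.
Proof.
  intros H. destruct H as [Hxb [Hp [Hf _]]]. unfold Bone.
  pose proof (clamp_range xb1 xb2 v ltac:(lra)).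
  pose proof (Hp _ H). pose proof (Hf _ H).
  unfold Rabs; destruct Rcase_abs; lra.
Qed.

Lemma bet_range x1 y1 xb1 xb2 psi phi u : PH x1 y1 xb1 xb2 psi phi ->
  0 <= bet xb1 xb2 psi phi u <= 1.
Proof.
  intros H. unfold bet, Bbar. pose proof (frac_range u). set (v := frac u) in *.
  pose proof H as H'. destruct H' as [Hxb _].
  destruct (Rle_dec v (/2)).
  - destruct (AB_out x1 y1 xb1 xb2 psi phi (v - /2) H ltac:(lra)) as [_ ->].
    pose proof (B1_range x1 y1 xb1 xb2 psi phi v H). lra.
  - destruct (AB_out x1 y1 xb1 xb2 psi phi v H ltac:(lra)) as [_ ->].
    pose proof (B1_range x1 y1 xb1 xb2 psi phi (v - /2) H). lra.
Qed.

Lemma Hn_1 z : Hn 1 z = z.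
Proof. unfold Hn. pose proof (frac_range z). unfold Rmin; destruct Rle_dec; [|lra].
  unfold frac; ring. Qed.

Lemma leb_case x1 y1 xb1 xb2 psi phi v a L : PH x1 y1 xb1 xb2 psi phi -> 0 <= v < 1 ->
  (xb1 < v -> xb2 <= v) -> (xb1 + /2 < v -> xb2 + /2 <= v) -> 0 <= L <= 1 ->
  L = Gm (Aone xb1 xb2 psi phi v + (1 - Aone xb1 xb2 psi phi (v - / 2) - Bone xb1 xb2 psi phi (v - / 2)))
    (Bone xb1 xb2 psi phi v + Bone xb1 xb2 psi phi (v - / 2) - 1) a L.
Proof.
  intros H Hv H1 H2 HL. pose proof H as H'. destruct H' as [Hxb _].
  destruct (AB_out x1 y1 xb1 xb2 psi phi v H) as [-> ->].
  { destruct (Rlt_dec xb1 v); [right; auto | left; lra]. }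
  destruct (AB_out x1 y1 xb1 xb2 psi phi (v - /2) H) as [-> ->].
  { destruct (Rlt_dec (xb1 + /2) v); [right; specialize (H2 r); lra | left; lra]. }
  replace (0 + (1 - 0 - 1)) with 0 by ring. replace (1 + 1 - 1) with 1 by ring.
  rewrite Gm_pos by lra. rewrite !Hn_1. field.
Qed.

Lemma mu0_Gm x1 y1 xb1 xb2 psi phi u a L : PH x1 y1 xb1 xb2 psi phi -> 0 <= L <= 1 ->
  mu0 x1 y1 xb1 xb2 psi phi u a L =
  Gm (alph xb1 xb2 psi phi u) (bet xb1 xb2 psi phi u) a L.
Proof.
  intros H HL. pose proof H as H'.
  destruct H' as [Hxb [Hp [Hph [Hp1 [Hf1 [Hp2 [Hf2 [Hlt [Hgt [Heq [Hy _]]]]]]]]]]].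
  unfold mu0, alph, bet, Abar, Bbar. cbv zeta.
  pose proof (frac_range u). set (v := frac u) in *.
  destruct (Rlt_dec xb1 v); destruct (Rlt_dec v xb2).
  {
    destruct (AB_out x1 y1 xb1 xb2 psi phi (v - /2) H ltac:(lra)) as [-> ->].
    unfold Aone, Bone. rewrite clamp_in by lra.
    replace (Rmin (psi v) (phi v) + (1 - 0 - 1)) with (Rmin (psi v) (phi v)) by ring.
    replace (Rabs (phi v - psi v) + 1 - 1) with (Rabs (phi v - psi v)) by ring.
    destruct (Req_EM_T v x1) as [E|E].
    + rewrite Gm_dirac.
      * unfold dirac. rewrite E, <- Heq.
        replace (Rmin (psi x1) (psi x1)) with (psi x1) by (unfold Rmin; destruct Rle_dec; lra).
        rewrite (eqT1_frac (psi x1 - a) (y1 - a)); [reflexivity|].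
        destruct Hy as [k Hk]. exists k. lra.
      * rewrite E, Heq. replace (phi x1 - phi x1) with 0 by ring. rewrite Rabs_R0. lra.
    + assert (Hb : 0 < Rabs (phi v - psi v)).
      { destruct (Rlt_dec v x1).
        - pose proof (Hlt v ltac:(lra)). rewrite Rabs_right; lra.
        - pose proof (Hgt v ltac:(lra)). rewrite Rabs_left; lra. }
      pose proof (Hp v ltac:(lra)). pose proof (Hph v ltac:(lra)).
      unfold Gm. destruct Rlt_dec; [|lra]. f_equal.
      apply arc_overlap_Hf; auto. split; [lra|]. unfold Rabs; destruct Rcase_abs; lra. }
  all: destruct (Rlt_dec (xb1 + /2) v); destruct (Rlt_dec v (xb2 + /2));
       try (apply (leb_case x1 y1); [exact H | lra | intro; lra | intro; lra | exact HL]).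
    {
      destruct (AB_out x1 y1 xb1 xb2 psi phi v H ltac:(lra)) as [-> ->].
      unfold Aone, Bone. rewrite clamp_in by lra.
      set (w := v - /2).
      pose proof (Hp w ltac:(unfold w in *; lra)). pose proof (Hph w ltac:(unfold w in *; lra)).
      pose proof (minabs (psi w) (phi w)).
      destruct (Req_EM_T w x1) as [E|E].
      * rewrite Gm_dirac.
        -- unfold dirac. rewrite E, <- Heq. rewrite E, <- Heq in H3.
           replace (Rmax (psi x1) (psi x1)) with (psi x1) in H3 by (unfold Rmax; destruct Rle_dec; lra).
           rewrite (eqT1_frac (0 + (1 - Rmin (psi x1) (psi x1) - Rabs (psi x1 - psi x1)) - a) (1 - y1 - a)); [reflexivity|].
           destruct Hy as [k Hk]. exists (-k)%Z. rewrite opp_IZR. lra.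
        -- rewrite E, Heq. replace (phi x1 - phi x1) with 0 by ring. rewrite Rabs_R0. lra.
      * assert (Hb : 0 < Rabs (phi w - psi w)).
        { destruct (Rlt_dec w x1).
          - pose proof (Hlt w ltac:(unfold w in *; lra)). rewrite Rabs_right; lra.
          - pose proof (Hgt w ltac:(unfold w in *; lra)). rewrite Rabs_left; lra. }
        set (c := Rmin (psi w) (phi w)). set (M := Rabs (phi w - psi w)).
        assert (HM : 0 <= M <= 1) by (unfold M; unfold Rabs; destruct Rcase_abs; lra).
        unfold Gm. replace (1 + M - 1) with M by ring. destruct Rlt_dec; [|unfold M in *; lra]. f_equal.
        rewrite arc_overlap_Hf by auto. unfold Hf.
        replace (a + L - (0 + (1 - c - M))) with (M - (1 - a - L - c)) by ring.
        replace (a - (0 + (1 - c - M))) with (M - (1 - a - c)) by ring.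
        pose proof (Hn_refl M (1 - a - L - c) HM). pose proof (Hn_refl M (1 - a - c) HM).
        replace (1 - a - L + L - c) with (1 - a - c) by ring.
        replace (1 - a - L - c) with (1 - a - L - c) by ring. lra. }
all: exfalso; lra.
Qed.

Definition ctsat (f : R -> R) (x : R) : Prop :=
  forall e, 0 < e -> exists d, 0 < d /\ forall y, Rabs (y - x) < d -> Rabs (f y - f x) < e.

Lemma cont_ctsat f x : continuity_pt f x -> ctsat f x.
Proof.
  intros H e He. destruct (H e He) as [d [Hd Hx]]. exists d. split; [lra|].
  intros y Hy. destruct (Req_dec y x) as [->|Hne].
  - replace (f x - f x) with 0 by ring. rewrite Rabs_R0; lra.
  - apply (Hx y). split; [split; [exact I| auto]| exact Hy].
Qed.

Lemma ctsat_const c x : ctsat (fun _ => c) x.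
Proof. intros e He. exists 1. split; [lra|]. intros. replace (c - c) with 0 by ring. rewrite Rabs_R0; lra. Qed.

Lemma ctsat_plus f g x : ctsat f x -> ctsat g x -> ctsat (fun y => f y + g y) x.
Proof.
  intros Hf Hg e He. destruct (Hf (e/2) ltac:(lra)) as [d1 [Hd1 H1]].
  destruct (Hg (e/2) ltac:(lra)) as [d2 [Hd2 H2]].
  exists (Rmin d1 d2). split; [apply Rmin_glb_lt; lra|]. intros y Hy.
  assert (Rabs (y - x) < d1) by (eapply Rlt_le_trans; [exact Hy| apply Rmin_l]).
  assert (Rabs (y - x) < d2) by (eapply Rlt_le_trans; [exact Hy| apply Rmin_r]).
  specialize (H1 y H). specialize (H2 y H0). apply abs_lt_inv in H1, H2. apply abs_lt. lra.
Qed.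

Lemma ctsat_opp f x : ctsat f x -> ctsat (fun y => - f y) x.
Proof.
  intros Hf e He. destruct (Hf e He) as [d [Hd H]]. exists d. split; auto.
  intros y Hy. specialize (H y Hy). apply abs_lt_inv in H. apply abs_lt. lra.
Qed.

Lemma ctsat_min f g x : ctsat f x -> ctsat g x -> ctsat (fun y => Rmin (f y) (g y)) x.
Proof.
  intros Hf Hg e He. destruct (Hf e He) as [d1 [Hd1 H1]].
  destruct (Hg e He) as [d2 [Hd2 H2]].
  exists (Rmin d1 d2). split; [apply Rmin_glb_lt; lra|]. intros y Hy.
  assert (Rabs (y - x) < d1) by (eapply Rlt_le_trans; [exact Hy| apply Rmin_l]).
  assert (Rabs (y - x) < d2) by (eapply Rlt_le_trans; [exact Hy| apply Rmin_r]).
  specialize (H1 y H). specialize (H2 y H0). apply abs_lt_inv in H1, H2. apply abs_lt.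
  unfold Rmin; repeat destruct Rle_dec; lra.
Qed.

Lemma ctsat_abs f x : ctsat f x -> ctsat (fun y => Rabs (f y)) x.
Proof.
  intros Hf e He. destruct (Hf e He) as [d [Hd H]]. exists d. split; auto.
  intros y Hy. specialize (H y Hy). apply abs_lt_inv in H. apply abs_lt.
  unfold Rabs; repeat destruct Rcase_abs; lra.
Qed.

Lemma ctsat_shift f c x : ctsat f (x + c) -> ctsat (fun y => f (y + c)) x.
Proof.
  intros Hf e He. destruct (Hf e He) as [d [Hd H]]. exists d. split; auto.
  intros y Hy. apply H. replace (y + c - (x + c)) with (y - x) by ring. auto.
Qed.

Lemma ctsat_ext f g x : (forall y, f y = g y) -> ctsat f x -> ctsat g x.
Proof. intros E H e He. destruct (H e He) as [d [Hd H']]. exists d; split; auto.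
  intros y Hy. rewrite <- !E. auto. Qed.

Lemma ctsat_clamp (psi : R -> R) xb1 xb2 x : xb1 <= xb2 -> continuous_on_interval psi xb1 xb2 ->
  ctsat (fun y => psi (clampv xb1 xb2 y)) x.
Proof.
  intros Hx Hc e He.
  pose proof (clamp_range xb1 xb2 x Hx) as Hr.
  destruct (Hc _ Hr e He) as [d [Hd H]]. exists d. split; auto.
  intros y Hy. apply H; [apply clamp_range; auto|].
  eapply Rle_lt_trans; [|exact Hy].
  apply abs_le. pose proof (abs_ge (y - x)).
  unfold clampv, Rmax, Rmin; repeat destruct Rle_dec; lra.
Qed.

Lemma ctsat_ssum al r n x : continuity r -> ctsat (ssum al r n) x.
Proof.
  intros Hr. induction n as [|n IH].
  - apply ctsat_const.
  - simpl. apply ctsat_plus; auto. apply (ctsat_shift r (INR n * al) x). apply cont_ctsat, Hr.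
Qed.

Lemma A1_ct x1 y1 xb1 xb2 psi phi v : PH x1 y1 xb1 xb2 psi phi -> ctsat (Aone xb1 xb2 psi phi) v.
Proof.
  intros H. destruct H as [Hxb [_ [_ [_ [_ [_ [_ [_ [_ [_ [_ [Hc1 Hc2]]]]]]]]]]]].
  unfold Aone. apply ctsat_min; apply ctsat_clamp; auto; lra.
Qed.

Lemma B1_ct x1 y1 xb1 xb2 psi phi v : PH x1 y1 xb1 xb2 psi phi -> ctsat (Bone xb1 xb2 psi phi) v.
Proof.
  intros H. destruct H as [Hxb [_ [_ [_ [_ [_ [_ [_ [_ [_ [_ [Hc1 Hc2]]]]]]]]]]]].
  unfold Bone. apply ctsat_abs. apply ctsat_plus; [|apply ctsat_opp]; apply ctsat_clamp; auto; lra.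
Qed.

Lemma Abar_ct x1 y1 xb1 xb2 psi phi v : PH x1 y1 xb1 xb2 psi phi -> ctsat (Abar xb1 xb2 psi phi) v.
Proof.
  intros H. unfold Abar. apply ctsat_plus; [apply (A1_ct x1 y1); auto|].
  apply (ctsat_ext (fun y => 1 + (- Aone xb1 xb2 psi phi (y + - / 2) + - Bone xb1 xb2 psi phi (y + - /2)))).
  { intro y. unfold Rminus. ring. }
  apply ctsat_plus; [apply ctsat_const|]. apply ctsat_plus; apply ctsat_opp;
  apply (ctsat_shift _ (- /2)); [apply (A1_ct x1 y1) | apply (B1_ct x1 y1)]; auto.
Qed.

Lemma Bbar_ct x1 y1 xb1 xb2 psi phi v : PH x1 y1 xb1 xb2 psi phi -> ctsat (Bbar xb1 xb2 psi phi) v.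
Proof.
  intros H. unfold Bbar.
  apply (ctsat_ext (fun y => Bone xb1 xb2 psi phi y + (Bone xb1 xb2 psi phi (y + - / 2) + -1))).
  { intro y. unfold Rminus. ring. }
  apply ctsat_plus; [apply (B1_ct x1 y1); auto|]. apply ctsat_plus; [|apply ctsat_const].
  apply (ctsat_shift _ (- /2)). apply (B1_ct x1 y1); auto.
Qed.

Lemma Abar_01 x1 y1 xb1 xb2 psi phi : PH x1 y1 xb1 xb2 psi phi ->
  Abar xb1 xb2 psi phi 0 = Abar xb1 xb2 psi phi 1 /\ Bbar xb1 xb2 psi phi 0 = Bbar xb1 xb2 psi phi 1.
Proof.
  intros H. pose proof H as H'. destruct H' as [Hxb _]. unfold Abar, Bbar.
  destruct (AB_out x1 y1 xb1 xb2 psi phi 0 H ltac:(lra)) as [-> ->].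
  destruct (AB_out x1 y1 xb1 xb2 psi phi 1 H ltac:(lra)) as [-> ->].
  destruct (AB_out x1 y1 xb1 xb2 psi phi (0 - /2) H ltac:(lra)) as [-> ->].
  destruct (AB_out x1 y1 xb1 xb2 psi phi (1 - /2) H ltac:(lra)) as [-> ->].
  split; ring.
Qed.

Lemma frac_comp_cont (g : R -> R) u e : (forall v, ctsat g v) -> g 0 = g 1 -> 0 < e ->
  exists d, 0 < d /\ forall h, Rabs h < d -> Rabs (g (frac (u + h)) - g (frac u)) < e.
Proof.
  intros Hg H01 He. pose proof (frac_range u) as Hr. pose proof (frac_eq u) as Eu.
  set (v := frac u) in *. set (n := Int_part u) in *.
  destruct (Req_dec v 0) as [E|E].
  - destruct (Hg 0 e He) as [d0 [Hd0 H0]]. destruct (Hg 1 e He) as [d1 [Hd1 H1]].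
    exists (Rmin (Rmin d0 d1) (/2)). split; [repeat apply Rmin_glb_lt; lra|].
    intros h Hh. assert (Rmin (Rmin d0 d1) (/2) <= d0 /\ Rmin (Rmin d0 d1) (/2) <= d1 /\ Rmin (Rmin d0 d1) (/2) <= /2)
      as [R1 [R2 R3]] by (unfold Rmin; repeat destruct Rle_dec; lra).
    pose proof (abs_lt_inv _ _ Hh).
    rewrite E. destruct (Rle_dec 0 h).
    + rewrite (frac_char (u + h) n h) by lra. apply H0. rewrite Rminus_0_r. lra.
    + rewrite (frac_char (u + h) (n - 1) (1 + h)) by (try rewrite minus_IZR; simpl; lra).
      rewrite H01. apply H1. replace (1 + h - 1) with h by ring. lra.
  - destruct (Hg v e He) as [d0 [Hd0 H0]].
    exists (Rmin d0 (Rmin v (1 - v))). split; [repeat apply Rmin_glb_lt; lra|].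
    intros h Hh. assert (Rmin d0 (Rmin v (1 - v)) <= d0 /\ Rmin d0 (Rmin v (1 - v)) <= v /\ Rmin d0 (Rmin v (1 - v)) <= 1 - v)
      as [R1 [R2 R3]] by (unfold Rmin; repeat destruct Rle_dec; lra).
    pose proof (abs_lt_inv _ _ Hh).
    rewrite (frac_char (u + h) n (v + h)) by lra. apply H0.
    replace (v + h - v) with h by ring. lra.
Qed.

Lemma alph_cont x1 y1 xb1 xb2 psi phi u e : PH x1 y1 xb1 xb2 psi phi -> 0 < e ->
  exists d, 0 < d /\ forall h, Rabs h < d ->
    Rabs (alph xb1 xb2 psi phi (u + h) - alph xb1 xb2 psi phi u) < e /\
    Rabs (bet xb1 xb2 psi phi (u + h) - bet xb1 xb2 psi phi u) < e.
Proof.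
  intros H He. destruct (Abar_01 x1 y1 xb1 xb2 psi phi H) as [E1 E2].
  destruct (frac_comp_cont (Abar xb1 xb2 psi phi) u e (fun v => Abar_ct x1 y1 xb1 xb2 psi phi v H) E1 He) as [d1 [Hd1 H1]].
  destruct (frac_comp_cont (Bbar xb1 xb2 psi phi) u e (fun v => Bbar_ct x1 y1 xb1 xb2 psi phi v H) E2 He) as [d2 [Hd2 H2]].
  exists (Rmin d1 d2). split; [apply Rmin_glb_lt; lra|]. intros h Hh.
  unfold alph, bet. split.
  - apply H1. eapply Rlt_le_trans; [exact Hh| apply Rmin_l].
  - apply H2. eapply Rlt_le_trans; [exact Hh| apply Rmin_r].
Qed.

Lemma alph_per xb1 xb2 psi phi u k : alph xb1 xb2 psi phi (u + IZR k) = alph xb1 xb2 psi phi u /\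
  bet xb1 xb2 psi phi (u + IZR k) = bet xb1 xb2 psi phi u.
Proof. unfold alph, bet. rewrite frac_shift. auto. Qed.

Lemma is_series_Rscal c a l : is_series a l -> is_series (fun n => c * a n) (c * l).
Proof. intros H. exact (@is_series_scal R_AbsRing R_NormedModule c a l H). Qed.
Lemma is_series_Rplus a b la lb : is_series a la -> is_series b lb -> is_series (fun n => a n + b n) (la + lb).
Proof. intros H1 H2. exact (@is_series_plus R_AbsRing R_NormedModule a b la lb H1 H2). Qed.

Definition SS (g : nat -> R) : R := series_sum (fun n => (/ 2) ^ (n + 1) * g n).

Definition bdd (g : nat -> R) (B : R) : Prop := forall n, 0 <= g n <= B.

Lemma w_pos n : 0 < (/ 2) ^ (n + 1).
Proof. apply pow_lt. lra. Qed.

Lemma geom_half : is_series (fun n => (/ 2) ^ (n + 1)) 1.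
Proof.
  assert (H := is_series_geom (/ 2) ltac:(rewrite Rabs_right; lra)).
  apply (is_series_Rscal (/ 2)) in H.
  replace 1 with (/ 2 * / (1 - / 2)) by field.
  eapply is_series_ext; [|apply H].
  intro n. rewrite pow_add. simpl. ring.
Qed.

Lemma series_sum_is a l : is_series a l -> series_sum a = l.
Proof.
  intros H. unfold series_sum. apply is_series_Reals in H.
  apply (uniqueness_sum a); auto.
  exact (epsilon_spec (inhabits 0) (fun l => infinite_sum a l) (ex_intro _ l H)).
Qed.

Lemma SS_is g B : bdd g B -> is_series (fun n => (/ 2) ^ (n + 1) * g n) (SS g).
Proof.
  intros Hg.
  assert (E : ex_series (fun n => (/ 2) ^ (n + 1) * g n)).
  { apply (@ex_series_le R_AbsRing R_CompleteNormedModule _ (fun n => B * (/ 2) ^ (n + 1))).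
    - intro n. change (norm ((/ 2) ^ (n + 1) * g n)) with (Rabs ((/ 2) ^ (n + 1) * g n)).
      specialize (Hg n). pose proof (w_pos n).
      rewrite Rabs_right by nra. nra.
    - exists (B * 1). apply is_series_Rscal, geom_half. }
  apply Series_correct in E. unfold SS. rewrite (series_sum_is _ _ E). exact E.
Qed.

Lemma SS_unroll g B : bdd g B -> SS g = / 2 * g 0%nat + / 2 * SS (fun k => g (S k)).
Proof.
  intros Hg. pose proof (SS_is g B Hg) as H.
  assert (Hg' : bdd (fun k => g (S k)) B) by (intro; apply Hg).
  pose proof (SS_is _ B Hg') as H'.
  apply (is_series_Rscal (/ 2)) in H'.
  assert (H2 : is_series (fun k => (/ 2) ^ (S k + 1) * g (S k)) (SS g - / 2 * g 0%nat)).
  { apply (@is_series_incr_1 R_AbsRing R_NormedModule (fun n => (/ 2) ^ (n + 1) * g n)).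
    match goal with |- is_series _ ?l => replace l with (SS g) end; [exact H|].
    unfold plus; simpl. ring. }
  assert (H3 : is_series (fun k => (/ 2) ^ (S k + 1) * g (S k)) (/ 2 * SS (fun k => g (S k)))).
  { eapply is_series_ext; [|exact H']. intro n. simpl. ring. }
  pose proof (is_series_unique _ _ H2). pose proof (is_series_unique _ _ H3). lra.
Qed.

Lemma SS_le g h B : bdd h B -> (forall n, 0 <= g n <= h n) -> SS g <= SS h.
Proof.
  intros Hh Hgh. assert (Hg : bdd g B) by (intro n; specialize (Hgh n); specialize (Hh n); lra).
  rewrite <- (is_series_unique _ _ (SS_is g B Hg)), <- (is_series_unique _ _ (SS_is h B Hh)).
  apply Series_le.
  - intro n. specialize (Hgh n). pose proof (w_pos n). split; [nra|].
    apply Rmult_le_compat_l; lra.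
  - exists (SS h). apply (SS_is h B Hh).
Qed.

Lemma SS_plus g h B C : bdd g B -> bdd h C -> SS (fun n => g n + h n) = SS g + SS h.
Proof.
  intros Hg Hh. pose proof (is_series_Rplus _ _ _ _ (SS_is g B Hg) (SS_is h C Hh)).
  unfold SS at 1. apply series_sum_is. eapply is_series_ext; [|exact H]. intro; simpl; ring.
Qed.

Lemma SS_const c : 0 <= c -> SS (fun _ => c) = c.
Proof.
  intros Hc. unfold SS. apply series_sum_is.
  pose proof (is_series_Rscal c _ _ geom_half). rewrite Rmult_1_r in H.
  eapply is_series_ext; [|exact H]. intro; simpl; ring.
Qed.

Lemma SS_ext g h : (forall n, g n = h n) -> SS g = SS h.
Proof.
  intros E. unfold SS. f_equal. apply functional_extensionality. intro n. rewrite E. reflexivity.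
Qed.

Lemma SS_range g : bdd g 1 -> 0 <= SS g <= 1.
Proof.
  intros Hg. pose proof (SS_const 0 ltac:(lra)). pose proof (SS_const 1 ltac:(lra)).
  split.
  - assert (SS (fun _ => 0) <= SS g) by (apply (SS_le _ _ 1); [exact Hg| intro n; specialize (Hg n); lra]). lra.
  - assert (SS g <= SS (fun _ => 1)) by (apply (SS_le _ _ 1); [intro; lra| intro n; specialize (Hg n); lra]). lra.
Qed.

Lemma SS_approx N : forall g h e, bdd g 1 -> bdd h 1 -> 0 <= e ->
  (forall n, (n <= N)%nat -> g n <= h n + e) -> SS g <= SS h + e + (/ 2) ^ (N + 1).
Proof.
  induction N as [|N IH]; intros g h e Hg Hh He H.
  - rewrite (SS_unroll g 1 Hg), (SS_unroll h 1 Hh).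
    pose proof (SS_range (fun k => g (S k)) (fun n => Hg (S n))).
    pose proof (SS_range (fun k => h (S k)) (fun n => Hh (S n))).
    specialize (H 0%nat (le_n 0)). simpl. lra.
  - rewrite (SS_unroll g 1 Hg), (SS_unroll h 1 Hh).
    pose proof (IH (fun k => g (S k)) (fun k => h (S k)) e (fun n => Hg (S n)) (fun n => Hh (S n)) He
      (fun n Hn => H (S n) ltac:(lia))).
    pose proof (H 0%nat ltac:(lia)).
    replace ((/ 2) ^ (S N + 1)) with (/ 2 * (/ 2) ^ (N + 1)) by (simpl; ring).
    lra.
Qed.

Lemma pow_half_small e : 0 < e -> exists N, (/ 2) ^ (N + 1) < e.
Proof.
  intros He. destruct (pow_lt_1_zero (/ 2) ltac:(rewrite Rabs_right; lra) e He) as [N HN].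
  exists N. specialize (HN (N + 1)%nat ltac:(lia)). rewrite Rabs_right in HN; [lra|].
  left; apply pow_lt; lra.
Qed.

Definition term al r xb1 xb2 psi phi (x a L : R) (n : nat) : R :=
  Gm (alph xb1 xb2 psi phi (x + INR n * al)) (bet xb1 xb2 psi phi (x + INR n * al)) (ssum al r n x + a) L.

Definition Marc al r xb1 xb2 psi phi (x a L : R) : R :=
  / 2 * (L + SS (term al r xb1 xb2 psi phi x a L)).

Lemma mu_Marc al r x1 y1 xb1 xb2 psi phi x L : PH x1 y1 xb1 xb2 psi phi -> 0 <= L <= 1 ->
  mu al r x1 y1 xb1 xb2 psi phi x L = Marc al r xb1 xb2 psi phi x 0 L.
Proof.
  intros H HL. unfold mu, Marc. f_equal. f_equal. unfold SS. f_equal.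
  apply functional_extensionality. intro n. unfold mun, term. rewrite Rplus_0_r.
  rewrite (mu0_Gm x1 y1) by auto. reflexivity.
Qed.

Lemma term_range al r x1 y1 xb1 xb2 psi phi x a L : PH x1 y1 xb1 xb2 psi phi -> 0 <= L <= 1 ->
  bdd (term al r xb1 xb2 psi phi x a L) 1.
Proof.
  intros H HL n. unfold term. apply Gm_range; auto. apply (bet_range x1 y1); auto.
Qed.

Lemma term_mono al r x1 y1 xb1 xb2 psi phi x a L L' n : PH x1 y1 xb1 xb2 psi phi ->
  0 <= L -> L <= L' -> L' <= 1 ->
  term al r xb1 xb2 psi phi x a L n <= term al r xb1 xb2 psi phi x a L' n.
Proof.
  intros H H1 H2 H3. unfold term. apply Gm_mono; auto. apply (bet_range x1 y1); auto.
Qed.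

Lemma Marc_slope al r x1 y1 xb1 xb2 psi phi x a L L' : PH x1 y1 xb1 xb2 psi phi ->
  0 <= L -> L <= L' -> L' <= 1 ->
  (L' - L) / 2 <= Marc al r xb1 xb2 psi phi x a L' - Marc al r xb1 xb2 psi phi x a L.
Proof.
  intros H H1 H2 H3. unfold Marc.
  assert (SS (term al r xb1 xb2 psi phi x a L) <= SS (term al r xb1 xb2 psi phi x a L')).
  { apply (SS_le _ _ 1). apply (term_range al r x1 y1); auto; lra.
    intro n. split; [apply (term_range al r x1 y1); auto; lra|].
    apply (term_mono al r x1 y1); auto. }
  lra.
Qed.

Lemma Marc_range al r x1 y1 xb1 xb2 psi phi x a L : PH x1 y1 xb1 xb2 psi phi -> 0 <= L <= 1 ->
  L / 2 <= Marc al r xb1 xb2 psi phi x a L <= (L + 1) / 2.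
Proof.
  intros H HL. unfold Marc. pose proof (SS_range _ (term_range al r x1 y1 xb1 xb2 psi phi x a L H HL)). lra.
Qed.

Lemma Marc_one al r x1 y1 xb1 xb2 psi phi x a : PH x1 y1 xb1 xb2 psi phi ->
  Marc al r xb1 xb2 psi phi x a 1 = 1.
Proof.
  intros H. unfold Marc. rewrite (SS_ext _ (fun _ => 1)).
  - rewrite SS_const; lra.
  - intro n. unfold term. apply Gm_one. apply (bet_range x1 y1); auto.
Qed.

Lemma fin_min (P : nat -> R -> Prop) N :
  (forall n d d', 0 < d' <= d -> P n d -> P n d') ->
  (forall n, (n <= N)%nat -> exists d, 0 < d /\ P n d) ->
  exists d, 0 < d /\ forall n, (n <= N)%nat -> P n d.
Proof.
  intros Hmono. induction N as [|N IH]; intros H.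
  - destruct (H 0%nat (le_n 0)) as [d [Hd Pd]]. exists d. split; auto.
    intros n Hn. replace n with 0%nat by lia. auto.
  - destruct IH as [d1 [Hd1 P1]]. { intros n Hn. apply H. lia. }
    destruct (H (S N) (le_n _)) as [d2 [Hd2 P2]].
    exists (Rmin d1 d2). split; [apply Rmin_glb_lt; auto|].
    intros n Hn. destruct (Nat.eq_dec n (S N)) as [->|Hne].
    + apply (Hmono _ d2); auto. split; [apply Rmin_glb_lt; auto| apply Rmin_r].
    + apply (Hmono _ d1); [split; [apply Rmin_glb_lt; auto| apply Rmin_l]|]. apply P1. lia.
Qed.

Lemma Marc_rc al r x1 y1 xb1 xb2 psi phi x a L e : PH x1 y1 xb1 xb2 psi phi -> 0 <= L < 1 -> 0 < e ->
  exists d, 0 < d /\ forall L', L <= L' < L + d -> L' <= 1 ->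
    Marc al r xb1 xb2 psi phi x a L' <= Marc al r xb1 xb2 psi phi x a L + e.
Proof.
  intros H HL He.
  destruct (pow_half_small (e / 2) ltac:(lra)) as [N HN].
  destruct (fin_min (fun n d => forall L', L <= L' < L + d -> L' <= 1 ->
     term al r xb1 xb2 psi phi x a L' n <= term al r xb1 xb2 psi phi x a L n + e / 4) N) as [d [Hd Hall]].
  { intros n d0 d' Hd' P L' H1 H2. apply P; lra. }
  { intros n Hn. unfold term. apply Gm_rc; auto; [apply (bet_range x1 y1); auto| lra]. }
  exists (Rmin d (e / 4)). split; [apply Rmin_glb_lt; lra|]. intros L' H1 H2.
  assert (Hd1 : Rmin d (e / 4) <= d) by apply Rmin_l. assert (Hd2 : Rmin d (e / 4) <= e / 4) by apply Rmin_r.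
  pose proof (SS_approx N (term al r xb1 xb2 psi phi x a L') (term al r xb1 xb2 psi phi x a L) (e / 4)
     (term_range al r x1 y1 xb1 xb2 psi phi x a L' H ltac:(lra))
     (term_range al r x1 y1 xb1 xb2 psi phi x a L H ltac:(lra)) ltac:(lra)
     (fun n Hn => Hall n Hn L' ltac:(lra) H2)).
  unfold Marc. lra.
Qed.

Lemma r_perZ (r : R -> R) : (forall x, r (x + 1) = r x) -> forall k x, r (x + IZR k) = r x.
Proof.
  intros Hr.
  assert (Hn : forall n x, r (x + INR n) = r x).
  { induction n as [|n IH]; intro x; [simpl; rewrite Rplus_0_r; auto|].
    rewrite S_INR. replace (x + (INR n + 1)) with ((x + INR n) + 1) by ring. rewrite Hr. auto. }
  intros k x. destruct (Z_le_gt_dec 0 k).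
  - replace (IZR k) with (INR (Z.to_nat k)) by (rewrite INR_IZR_INZ, Z2Nat.id; auto). apply Hn.
  - rewrite <- (Hn (Z.to_nat (- k)) (x + IZR k)).
    replace (INR (Z.to_nat (- k))) with (- IZR k) by (rewrite INR_IZR_INZ, Z2Nat.id by lia; rewrite opp_IZR; auto).
    f_equal. ring.
Qed.

Lemma ssum_per al r n x k : (forall x, r (x + 1) = r x) -> ssum al r n (x + IZR k) = ssum al r n x.
Proof.
  intros Hr. induction n as [|n IH]; simpl; auto.
  rewrite IH. replace (x + IZR k + INR n * al) with ((x + INR n * al) + IZR k) by ring.
  rewrite (r_perZ r Hr). auto.
Qed.

Lemma ssum_half al r n x : (forall x, r (x + / 2) = - r x) -> ssum al r n (x + / 2) = - ssum al r n x.
Proof.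
  intros Hr. induction n as [|n IH]; simpl; [ring|].
  rewrite IH. replace (x + / 2 + INR n * al) with ((x + INR n * al) + / 2) by ring.
  rewrite Hr. ring.
Qed.

Lemma alph_half x1 y1 xb1 xb2 psi phi u : PH x1 y1 xb1 xb2 psi phi ->
  alph xb1 xb2 psi phi (u + / 2) = 1 - alph xb1 xb2 psi phi u - bet xb1 xb2 psi phi u /\
  bet xb1 xb2 psi phi (u + / 2) = bet xb1 xb2 psi phi u.
Proof.
  intros H. pose proof H as H'. destruct H' as [Hxb _]. unfold alph, bet, Abar, Bbar.
  pose proof (frac_range u) as Hr. pose proof (frac_eq u) as Eu.
  set (v := frac u) in *. set (n := Int_part u) in *.
  destruct (Rlt_dec v (/ 2)).
  - rewrite (frac_char (u + /2) n (v + /2)) by lra.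
    replace (v + / 2 - / 2) with v by ring.
    destruct (AB_out x1 y1 xb1 xb2 psi phi (v + /2) H ltac:(lra)) as [-> ->].
    destruct (AB_out x1 y1 xb1 xb2 psi phi (v - /2) H ltac:(lra)) as [-> ->].
    split; ring.
  - rewrite (frac_char (u + /2) (n + 1) (v - /2)) by (try rewrite plus_IZR; simpl; lra).
    destruct (AB_out x1 y1 xb1 xb2 psi phi v H ltac:(lra)) as [-> ->].
    destruct (AB_out x1 y1 xb1 xb2 psi phi (v - /2 - /2) H ltac:(lra)) as [-> ->].
    split; ring.
Qed.

Lemma Marc_per al r xb1 xb2 psi phi x a L k : (forall x, r (x + 1) = r x) ->
  Marc al r xb1 xb2 psi phi (x + IZR k) a L = Marc al r xb1 xb2 psi phi x a L.
Proof.
  intros Hr. unfold Marc. f_equal. f_equal. apply SS_ext. intro n. unfold term.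
  rewrite ssum_per by auto.
  replace (x + IZR k + INR n * al) with ((x + INR n * al) + IZR k) by ring.
  destruct (alph_per xb1 xb2 psi phi (x + INR n * al) k) as [-> ->]. reflexivity.
Qed.

Lemma Marc_refl al r x1 y1 xb1 xb2 psi phi x L : PH x1 y1 xb1 xb2 psi phi ->
  (forall x, r (x + / 2) = - r x) -> 0 <= L <= 1 ->
  Marc al r xb1 xb2 psi phi (x + / 2) 0 L = Marc al r xb1 xb2 psi phi x (- L) L.
Proof.
  intros H Hr HL. unfold Marc. f_equal. f_equal. apply SS_ext. intro n. unfold term.
  rewrite ssum_half by auto.
  replace (x + / 2 + INR n * al) with ((x + INR n * al) + / 2) by ring.
  destruct (alph_half x1 y1 xb1 xb2 psi phi (x + INR n * al) H) as [-> ->].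
  rewrite Rplus_0_r. replace (ssum al r n x + - L) with (ssum al r n x - L) by ring.
  apply Gm_refl; auto. apply (bet_range x1 y1); auto.
Qed.

Lemma Marc_cover al r x1 y1 xb1 xb2 psi phi x t : PH x1 y1 xb1 xb2 psi phi -> 0 <= t <= 1 ->
  1 <= Marc al r xb1 xb2 psi phi x 0 t + Marc al r xb1 xb2 psi phi x (t - 1) (1 - t).
Proof.
  intros H Ht. unfold Marc.
  pose proof (SS_plus (term al r xb1 xb2 psi phi x 0 t) (term al r xb1 xb2 psi phi x (t - 1) (1 - t)) 1 1
    ltac:(apply (term_range al r x1 y1); auto; lra) ltac:(apply (term_range al r x1 y1); auto; lra)).
  assert (1 <= SS (fun n => term al r xb1 xb2 psi phi x 0 t n + term al r xb1 xb2 psi phi x (t - 1) (1 - t) n)).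
  { pose proof (SS_const 1 ltac:(lra)) as E1.
    enough (SS (fun _ => 1) <= SS (fun n => term al r xb1 xb2 psi phi x 0 t n + term al r xb1 xb2 psi phi x (t - 1) (1 - t) n)) by lra.
    apply (SS_le _ _ 2).
    - intro n. pose proof (term_range al r x1 y1 xb1 xb2 psi phi x 0 t H Ht n).
      pose proof (term_range al r x1 y1 xb1 xb2 psi phi x (t - 1) (1 - t) H ltac:(lra) n). lra.
    - intro n. split; [lra|]. unfold term.
      rewrite (Gm_eqT1 (alph xb1 xb2 psi phi (x + INR n * al)) (alph xb1 xb2 psi phi (x + INR n * al))
        (bet xb1 xb2 psi phi (x + INR n * al)) (ssum al r n x + (t - 1)) (ssum al r n x + 0 + t)).
      + apply Gm_cover; [apply (bet_range x1 y1); auto| auto].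
      + apply eqT1_refl.
      + exists (-1)%Z. simpl. ring. }
  lra.
Qed.

Definition NAx al r xb1 xb2 psi phi x : Prop := forall n,
  NA (alph xb1 xb2 psi phi (x + INR n * al)) (bet xb1 xb2 psi phi (x + INR n * al)) (ssum al r n x + 0).

Lemma Marc_disj al r x1 y1 xb1 xb2 psi phi x t m1 m2 t2 : PH x1 y1 xb1 xb2 psi phi ->
  NAx al r xb1 xb2 psi phi x ->
  0 <= t -> t < m1 -> m1 < m2 -> m2 < t2 -> t2 <= 1 ->
  Marc al r xb1 xb2 psi phi x 0 t + Marc al r xb1 xb2 psi phi x m1 (m2 - m1) +
  Marc al r xb1 xb2 psi phi x (t2 - 1) (1 - t2) <= 1.
Proof.
  intros H HNA H1 H2 H3 H4 H5. unfold Marc.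
  set (g1 := term al r xb1 xb2 psi phi x 0 t).
  set (g2 := term al r xb1 xb2 psi phi x m1 (m2 - m1)).
  set (g3 := term al r xb1 xb2 psi phi x (t2 - 1) (1 - t2)).
  assert (B1' : bdd g1 1) by (apply (term_range al r x1 y1); auto; lra).
  assert (B2 : bdd g2 1) by (apply (term_range al r x1 y1); auto; lra).
  assert (B3 : bdd g3 1) by (apply (term_range al r x1 y1); auto; lra).
  pose proof (SS_plus g1 g2 1 1 B1' B2).
  assert (B12 : bdd (fun n => g1 n + g2 n) 2) by (intro n; specialize (B1' n); specialize (B2 n); lra).
  pose proof (SS_plus (fun n => g1 n + g2 n) g3 2 1 B12 B3).
  assert (SS (fun n => g1 n + g2 n + g3 n) <= SS (fun _ => 1)).
  { apply (SS_le _ _ 1); [intro; lra|]. intro n.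
    split; [specialize (B1' n); specialize (B2 n); specialize (B3 n); lra|].
    unfold g1, g2, g3, term.
    rewrite (Gm_eqT1 (alph xb1 xb2 psi phi (x + INR n * al)) (alph xb1 xb2 psi phi (x + INR n * al))
        (bet xb1 xb2 psi phi (x + INR n * al)) (ssum al r n x + (t2 - 1)) (ssum al r n x + 0 + t2));
      [| apply eqT1_refl | exists (-1)%Z; simpl; ring].
    replace (ssum al r n x + m1) with (ssum al r n x + 0 + m1) by ring.
    apply Gm_disj; auto. apply (bet_range x1 y1); auto. }
  rewrite SS_const in H7 by lra. lra.
Qed.

Lemma Marc_zero al r x1 y1 xb1 xb2 psi phi x : PH x1 y1 xb1 xb2 psi phi ->
  NAx al r xb1 xb2 psi phi x -> Marc al r xb1 xb2 psi phi x 0 0 = 0.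
Proof.
  intros H HNA. unfold Marc. rewrite (SS_ext _ (fun _ => 0)).
  - rewrite SS_const; lra.
  - intro n. unfold term. apply Gm_zero; auto. apply (bet_range x1 y1); auto.
Qed.

Lemma Marc_lcont al r x1 y1 xb1 xb2 psi phi x a L e : PH x1 y1 xb1 xb2 psi phi ->
  (forall n, 0 < bet xb1 xb2 psi phi (x + INR n * al)) -> 0 <= L <= 1 -> 0 < e ->
  exists d, 0 < d /\ forall L', 0 <= L' <= 1 -> Rabs (L' - L) < d ->
    Rabs (Marc al r xb1 xb2 psi phi x a L' - Marc al r xb1 xb2 psi phi x a L) <= e.
Proof.
  intros H Hb HL He.
  destruct (pow_half_small (e / 2) ltac:(lra)) as [N HN].
  destruct (fin_min (fun n d => forall L', 0 <= L' <= 1 -> Rabs (L' - L) < d ->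
     Rabs (term al r xb1 xb2 psi phi x a L' n - term al r xb1 xb2 psi phi x a L n) <= e / 4) N) as [d [Hd Hall]].
  { intros n d0 d' Hd' P L' H1 H2. apply P; auto; lra. }
  { intros n Hn. unfold term. apply Gm_lcont; auto; [| lra].
    pose proof (bet_range x1 y1 xb1 xb2 psi phi (x + INR n * al) H). specialize (Hb n). lra. }
  exists (Rmin d (e / 4)). split; [apply Rmin_glb_lt; lra|]. intros L' H1 H2.
  assert (Hd1 : Rmin d (e / 4) <= d) by apply Rmin_l. assert (Hd2 : Rmin d (e / 4) <= e / 4) by apply Rmin_r.
  pose proof (term_range al r x1 y1 xb1 xb2 psi phi x a L' H H1) as T1.
  pose proof (term_range al r x1 y1 xb1 xb2 psi phi x a L H HL) as T2.
  pose proof (SS_approx N _ _ (e / 4) T1 T2 ltac:(lra)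
     (fun n Hn => ltac:(pose proof (abs_le_inv _ _ (Hall n Hn L' H1 ltac:(lra))); lra))).
  pose proof (SS_approx N _ _ (e / 4) T2 T1 ltac:(lra)
     (fun n Hn => ltac:(pose proof (abs_le_inv _ _ (Hall n Hn L' H1 ltac:(lra))); lra))).
  apply abs_lt_inv in H2.
  unfold Marc. apply abs_le. lra.
Qed.

Lemma Marc_W al r x1 y1 xb1 xb2 psi phi x L d e : PH x1 y1 xb1 xb2 psi phi -> continuity r ->
  NAx al r xb1 xb2 psi phi x -> 0 <= L -> L + d <= 1 -> 0 < d -> 0 < e ->
  exists rho, 0 < rho /\ forall h, Rabs h < rho ->
    Marc al r xb1 xb2 psi phi x 0 L - e <= Marc al r xb1 xb2 psi phi (x + h) 0 (L + d) /\
    Marc al r xb1 xb2 psi phi (x + h) 0 L <= Marc al r xb1 xb2 psi phi x 0 (L + d) + e.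
Proof.
  intros H Hr HNA HL HLd Hd He.
  destruct (pow_half_small (e / 2) ltac:(lra)) as [N HN].
  destruct (fin_min (fun n rho => forall h, Rabs h < rho ->
     term al r xb1 xb2 psi phi x 0 L n - e / 2 <= term al r xb1 xb2 psi phi (x + h) 0 (L + d) n /\
     term al r xb1 xb2 psi phi (x + h) 0 L n <= term al r xb1 xb2 psi phi x 0 (L + d) n + e / 2) N)
    as [rho [Hrho Hall]].
  { intros n d0 d' Hd' P h Hh. apply P; lra. }
  { intros n Hn. unfold term.
    destruct (Gm_W (alph xb1 xb2 psi phi (x + INR n * al)) (bet xb1 xb2 psi phi (x + INR n * al))
       (ssum al r n x + 0) L d (e / 2) (bet_range x1 y1 xb1 xb2 psi phi _ H) HL HLd Hd ltac:(lra) (HNA n))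
      as [g [Hg HW]].
    destruct (alph_cont x1 y1 xb1 xb2 psi phi (x + INR n * al) g H Hg) as [d1 [Hd1 HA]].
    destruct (ctsat_ssum al r n x Hr g Hg) as [d2 [Hd2 HS]].
    exists (Rmin d1 d2). split; [apply Rmin_glb_lt; lra|]. intros h Hh.
    assert (Rabs h < d1) by (eapply Rlt_le_trans; [exact Hh| apply Rmin_l]).
    assert (Rabs h < d2) by (eapply Rlt_le_trans; [exact Hh| apply Rmin_r]).
    destruct (HA h H0) as [HA1 HA2].
    replace (x + h + INR n * al) with (x + INR n * al + h) by ring.
    apply HW; auto.
    - replace (ssum al r n (x + h) + 0 - (ssum al r n x + 0)) with (ssum al r n (x + h) - ssum al r n x) by ring.
      apply HS. replace (x + h - x) with h by ring. auto.
    - apply (bet_range x1 y1); auto. }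
  exists rho. split; auto. intros h Hh.
  pose proof (term_range al r x1 y1 xb1 xb2 psi phi x 0 L H ltac:(lra)) as T1.
  pose proof (term_range al r x1 y1 xb1 xb2 psi phi x 0 (L + d) H ltac:(lra)) as T2.
  pose proof (term_range al r x1 y1 xb1 xb2 psi phi (x + h) 0 L H ltac:(lra)) as T3.
  pose proof (term_range al r x1 y1 xb1 xb2 psi phi (x + h) 0 (L + d) H ltac:(lra)) as T4.
  pose proof (SS_approx N _ _ (e / 2) T1 T4 ltac:(lra)
     (fun n Hn => ltac:(pose proof (proj1 (Hall n Hn h Hh)); lra))).
  pose proof (SS_approx N _ _ (e / 2) T3 T2 ltac:(lra)
     (fun n Hn => proj2 (Hall n Hn h Hh))).
  unfold Marc. split; lra.
Qed.

Definition tauP (F : R -> R) (y y' : R) : Prop :=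
  (0 <= y' <= 1) /\ y <= F y' /\ forall y'', 0 <= y'' <= 1 -> y <= F y'' -> y' <= y''.

Definition tauG (F : R -> R) (y : R) : R := epsilon (inhabits 0) (tauP F y).

Definition FH (F : R -> R) : Prop :=
  (forall L L', 0 <= L -> L <= L' -> L' <= 1 -> (L' - L) / 2 <= F L' - F L) /\
  F 1 = 1 /\ 0 <= F 0 /\
  (forall L e, 0 <= L < 1 -> 0 < e -> exists d, 0 < d /\ forall L', L <= L' < L + d -> L' <= 1 -> F L' <= F L + e).

Lemma tau_exists F y : FH F -> y <= 1 -> exists m, tauP F y m.
Proof.
  intros [Hs [H1 [H0 Hrc]]] Hy.
  set (E := fun z => 0 <= - z <= 1 /\ y <= F (- z)).
  assert (Hb : bound E) by (exists 0; intros z [Hz _]; lra).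
  assert (He : exists z, E z) by (exists (-1); unfold E; replace (- -1) with 1 by ring; rewrite H1; lra).
  destruct (completeness E Hb He) as [l [Hub Hlub]].
  set (m := - l).
  assert (Hlow : forall z, 0 <= z <= 1 -> y <= F z -> m <= z).
  { intros z Hz Hyz. assert (E (- z)) by (unfold E; rewrite Ropp_involutive; auto).
    specialize (Hub _ H). unfold m; lra. }
  assert (Hglb : forall b, (forall z, 0 <= z <= 1 -> y <= F z -> b <= z) -> b <= m).
  { intros b Hb'. assert (is_upper_bound E (- b)).
    { intros z [Hz Hyz]. specialize (Hb' _ Hz Hyz). lra. }
    specialize (Hlub _ H). unfold m; lra. }
  assert (Hm1 : m <= 1) by (apply Hlow; [lra| rewrite H1; auto]).
  assert (Hm0 : 0 <= m) by (apply Hglb; intros; lra).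
  exists m. split; [lra|]. split; [|exact Hlow].
  destruct (Req_dec m 1) as [E1|E1]; [rewrite E1, H1; auto|].
  destruct (Rle_dec y (F m)) as [|Hn]; auto. exfalso.
  destruct (Hrc m ((y - F m) / 2) ltac:(lra) ltac:(lra)) as [d [Hd Hd']].
  set (b := m + Rmin d (1 - m) / 2).
  assert (Hmin : 0 < Rmin d (1 - m)) by (apply Rmin_glb_lt; lra).
  assert (Rmin d (1 - m) <= d) by apply Rmin_l. assert (Rmin d (1 - m) <= 1 - m) by apply Rmin_r.
  assert (b <= m).
  { apply Hglb. intros z Hz Hyz. destruct (Rlt_dec z b); [|lra].
    destruct (Rlt_dec z m).
    - specialize (Hlow z Hz Hyz). lra.
    - specialize (Hd' z ltac:(unfold b in *; lra) ltac:(lra)). lra. }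
  unfold b in *; lra.
Qed.

Lemma tau_spec F y : FH F -> y <= 1 -> tauP F y (tauG F y).
Proof.
  intros H Hy. unfold tauG. apply epsilon_spec. apply tau_exists; auto.
Qed.

Lemma FH_mono F L L' : FH F -> 0 <= L -> L <= L' -> L' <= 1 -> F L <= F L'.
Proof. intros [Hs _] H1 H2 H3. specialize (Hs L L' H1 H2 H3). lra. Qed.

Lemma tau_lt F y t : FH F -> y <= 1 -> 0 <= t <= 1 -> t < tauG F y -> F t < y.
Proof.
  intros H Hy Ht Hlt. destruct (tau_spec F y H Hy) as [_ [_ Hmin]].
  destruct (Rlt_dec (F t) y); auto. specialize (Hmin t Ht ltac:(lra)). lra.
Qed.

Lemma tau_F F t : FH F -> 0 <= t <= 1 -> tauG F (F t) = t.
Proof.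
  intros H Ht. pose proof H as [Hs [H1 _]].
  assert (Hy : F t <= 1) by (rewrite <- H1; apply FH_mono; auto; lra).
  destruct (tau_spec F (F t) H Hy) as [Hr [Hge Hmin]].
  specialize (Hmin t Ht ltac:(lra)).
  destruct (Req_dec (tauG F (F t)) t); auto.
  specialize (Hs (tauG F (F t)) t ltac:(lra) Hmin ltac:(lra)). lra.
Qed.

Lemma tau_zero F : FH F -> tauG F 0 = 0.
Proof.
  intros H. pose proof H as [_ [_ [H0 _]]].
  destruct (tau_spec F 0 H ltac:(lra)) as [Hr [_ Hmin]].
  specialize (Hmin 0 ltac:(lra) H0). lra.
Qed.

Lemma tau_eq F y : FH F -> F 0 = 0 ->
  (forall L e, 0 <= L <= 1 -> 0 < e -> exists d, 0 < d /\ forall L', 0 <= L' <= 1 -> Rabs (L' - L) < d -> Rabs (F L' - F L) <= e) ->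
  0 <= y <= 1 -> F (tauG F y) = y.
Proof.
  intros H HF0 Hc Hy. destruct (tau_spec F y H ltac:(lra)) as [Hr [Hge Hmin]].
  set (t := tauG F y) in *.
  destruct (Req_dec t 0) as [E|E].
  - rewrite E in *. lra.
  - apply Rle_antisym; auto.
    apply Rnot_lt_le. intro Hlt.
    destruct (Hc t ((F t - y) / 2) Hr ltac:(lra)) as [d [Hd Hd']].
    set (t' := t - Rmin d t / 2).
    assert (0 < Rmin d t) by (apply Rmin_glb_lt; lra).
    assert (Rmin d t <= d) by apply Rmin_l. assert (Rmin d t <= t) by apply Rmin_r.
    assert (Ht' : 0 <= t' <= 1) by (unfold t'; lra).
    pose proof (tau_lt F y t' H ltac:(lra) Ht' ltac:(change (t' < t); unfold t'; lra)).
    assert (Habs : Rabs (t' - t) < d).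
    { replace (t' - t) with (- (Rmin d t / 2)) by (unfold t'; ring).
      rewrite Rabs_Ropp, Rabs_right; lra. }
    specialize (Hd' t' Ht' Habs).
    unfold Rabs in Hd'; destruct Rcase_abs in Hd'; lra.
Qed.

Lemma tau_strict F y y' : FH F -> F 0 = 0 ->
  (forall L e, 0 <= L <= 1 -> 0 < e -> exists d, 0 < d /\ forall L', 0 <= L' <= 1 -> Rabs (L' - L) < d -> Rabs (F L' - F L) <= e) ->
  0 <= y -> y < y' -> y' <= 1 -> tauG F y < tauG F y'.
Proof.
  intros H H0 Hc H1 H2 H3.
  pose proof (tau_eq F y H H0 Hc ltac:(lra)). pose proof (tau_eq F y' H H0 Hc ltac:(lra)).
  destruct (tau_spec F y H ltac:(lra)) as [R1 _]. destruct (tau_spec F y' H ltac:(lra)) as [R2 _].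
  destruct (Rlt_dec (tauG F y) (tauG F y')); auto.
  pose proof (FH_mono F (tauG F y') (tauG F y) H ltac:(lra) ltac:(lra) ltac:(lra)). lra.
Qed.

Definition Wprop (Ff : R -> R -> R) : Prop :=
  forall x L d e, 0 <= L -> L + d <= 1 -> 0 < d -> 0 < e ->
  exists rho, 0 < rho /\ forall h, Rabs h < rho ->
    Ff x L - e <= Ff (x + h) (L + d) /\ Ff (x + h) L <= Ff x (L + d) + e.

Lemma tau_upper Ff x s eps : (forall x, FH (Ff x)) -> Wprop Ff -> 0 <= s <= 1 -> 0 < eps ->
  exists rho, 0 < rho /\ forall h s', Rabs h < rho -> 0 <= s' <= 1 -> Rabs (s' - s) < rho ->
    tauG (Ff (x + h)) s' < tauG (Ff x) s + eps.
Proof.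
  intros HF HW Hs He.
  destruct (tau_spec (Ff x) s (HF x) ltac:(lra)) as [Hr [Hge Hmin]].
  set (t := tauG (Ff x) s) in *.
  destruct (Rle_dec (t + eps / 2) 1).
  - destruct (HW x t (eps / 4) (eps / 16) ltac:(lra) ltac:(lra) ltac:(lra) ltac:(lra)) as [rho [Hrho HH]].
    exists (Rmin rho (eps / 16)). split; [apply Rmin_glb_lt; lra|].
    intros h s' Hh Hs' Hss.
    assert (Rabs h < rho) by (eapply Rlt_le_trans; [exact Hh| apply Rmin_l]).
    assert (Rabs (s' - s) < eps / 16) by (eapply Rlt_le_trans; [exact Hss| apply Rmin_r]).
    apply abs_lt_inv in H0.
    destruct (HH h H) as [A _].
    pose proof (HF (x + h)) as [Hsl _].
    specialize (Hsl (t + eps / 4) (t + eps / 2) ltac:(lra) ltac:(lra) r).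
    destruct (tau_spec (Ff (x + h)) s' (HF _) ltac:(lra)) as [_ [_ Hmin']].
    specialize (Hmin' (t + eps / 2) ltac:(lra) ltac:(lra)). lra.
  - exists 1. split; [lra|]. intros h s' _ Hs' _.
    destruct (tau_spec (Ff (x + h)) s' (HF _) ltac:(lra)) as [[_ H1] _]. lra.
Qed.

Lemma tau_lower Ff x s eps : (forall x, FH (Ff x)) -> Wprop Ff -> 0 <= s <= 1 -> 0 < eps ->
  exists rho, 0 < rho /\ forall h s', Rabs h < rho -> 0 <= s' <= 1 -> Rabs (s' - s) < rho ->
    tauG (Ff x) s - eps < tauG (Ff (x + h)) s'.
Proof.
  intros HF HW Hs He.
  destruct (tau_spec (Ff x) s (HF x) ltac:(lra)) as [Hr [Hge Hmin]].
  set (t := tauG (Ff x) s) in *.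
  destruct (Rle_dec 0 (t - eps)).
  - destruct (HW x (t - eps) (eps / 2) (eps / 16) ltac:(lra) ltac:(lra) ltac:(lra) ltac:(lra)) as [rho [Hrho HH]].
    exists (Rmin rho (eps / 16)). split; [apply Rmin_glb_lt; lra|].
    intros h s' Hh Hs' Hss.
    assert (Rabs h < rho) by (eapply Rlt_le_trans; [exact Hh| apply Rmin_l]).
    assert (Rabs (s' - s) < eps / 16) by (eapply Rlt_le_trans; [exact Hss| apply Rmin_r]).
    apply abs_lt_inv in H0.
    destruct (HH h H) as [_ A]. replace (t - eps + eps / 2) with (t - eps / 2) in A by field.
    pose proof (HF x) as [Hsl _].
    specialize (Hsl (t - eps / 2) (t - eps / 4) ltac:(lra) ltac:(lra) ltac:(lra)).
    pose proof (tau_lt (Ff x) s (t - eps / 4) (HF x) ltac:(lra) ltac:(lra) ltac:(change (t - eps / 4 < t); lra)).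
    destruct (tau_spec (Ff (x + h)) s' (HF _) ltac:(lra)) as [Hr' [Hge' _]].
    destruct (Rlt_dec (t - eps) (tauG (Ff (x + h)) s')); auto.
    pose proof (FH_mono (Ff (x + h)) (tauG (Ff (x + h)) s') (t - eps) (HF _) ltac:(lra) ltac:(lra) ltac:(lra)). lra.
  - exists 1. split; [lra|]. intros h s' _ Hs' _.
    destruct (tau_spec (Ff (x + h)) s' (HF _) ltac:(lra)) as [[H1 _] _]. lra.
Qed.

Lemma tau_cont Ff x s eps : (forall x, FH (Ff x)) -> Wprop Ff -> 0 <= s <= 1 -> 0 < eps ->
  exists rho, 0 < rho /\ forall h s', Rabs h < rho -> 0 <= s' <= 1 -> Rabs (s' - s) < rho ->
    Rabs (tauG (Ff (x + h)) s' - tauG (Ff x) s) < eps.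
Proof.
  intros HF HW Hs He.
  destruct (tau_upper Ff x s eps HF HW Hs He) as [r1 [Hr1 H1]].
  destruct (tau_lower Ff x s eps HF HW Hs He) as [r2 [Hr2 H2]].
  exists (Rmin r1 r2). split; [apply Rmin_glb_lt; lra|].
  intros h s' Hh Hs' Hss.
  assert (Rmin r1 r2 <= r1) by apply Rmin_l. assert (Rmin r1 r2 <= r2) by apply Rmin_r.
  specialize (H1 h s' ltac:(lra) Hs' ltac:(lra)). specialize (H2 h s' ltac:(lra) Hs' ltac:(lra)).
  apply abs_lt. lra.
Qed.

Lemma Bone_zero x1 y1 xb1 xb2 psi phi v : PH x1 y1 xb1 xb2 psi phi ->
  Bone xb1 xb2 psi phi v = 0 -> v = x1 /\ Aone xb1 xb2 psi phi v = psi x1.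
Proof.
  intros H H0. pose proof H as H'.
  destruct H' as [Hxb [Hp [Hph [Hp1 [Hf1 [Hp2 [Hf2 [Hlt [Hgt [Heq _]]]]]]]]]].
  destruct (Rle_dec v xb1).
  { destruct (AB_out x1 y1 xb1 xb2 psi phi v H ltac:(lra)); lra. }
  destruct (Rle_dec xb2 v).
  { destruct (AB_out x1 y1 xb1 xb2 psi phi v H ltac:(lra)); lra. }
  unfold Bone, Aone in *. rewrite clamp_in in * by lra.
  destruct (Rlt_dec v x1).
  - pose proof (Hlt v ltac:(lra)). rewrite Rabs_right in H0; lra.
  - destruct (Rlt_dec x1 v).
    + pose proof (Hgt v ltac:(lra)). rewrite Rabs_left in H0; lra.
    + assert (v = x1) by lra. subst v. split; auto. rewrite <- Heq. unfold Rmin; destruct Rle_dec; lra.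
Qed.

Lemma bet_zero x1 y1 xb1 xb2 psi phi u : PH x1 y1 xb1 xb2 psi phi ->
  ~ 0 < bet xb1 xb2 psi phi u ->
  (frac u = x1 /\ alph xb1 xb2 psi phi u = psi x1) \/
  (frac u = x1 + / 2 /\ alph xb1 xb2 psi phi u = 1 - psi x1).
Proof.
  intros H Hb. pose proof (bet_range x1 y1 xb1 xb2 psi phi u H).
  assert (E : bet xb1 xb2 psi phi u = 0) by lra. clear Hb H0.
  pose proof H as H'. destruct H' as [Hxb _].
  unfold bet, alph, Bbar, Abar in *. pose proof (frac_range u). set (v := frac u) in *.
  destruct (Rlt_dec v (/ 2)).
  - destruct (AB_out x1 y1 xb1 xb2 psi phi (v - /2) H ltac:(lra)) as [E1 E2]. rewrite E1, E2 in *.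
    destruct (Bone_zero x1 y1 xb1 xb2 psi phi v H ltac:(lra)) as [-> E3].
    left. split; auto. rewrite E3. ring.
  - destruct (AB_out x1 y1 xb1 xb2 psi phi v H ltac:(lra)) as [E1 E2]. rewrite E1, E2 in *.
    destruct (Bone_zero x1 y1 xb1 xb2 psi phi (v - /2) H ltac:(lra)) as [E3 E4].
    right. split; [lra|]. rewrite E4. assert (Bone xb1 xb2 psi phi (v - / 2) = 0) by lra.
    rewrite H1. ring.
Qed.

Lemma ssum_S al r n y : ssum al r (S n) y = r y + ssum al r n (y + al).
Proof.
  induction n as [|n IH].
  - simpl. rewrite Rmult_0_l, !Rplus_0_r, Rplus_0_l. reflexivity.
  - change (ssum al r (S (S n)) y) with (ssum al r (S n) y + r (y + INR (S n) * al)).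
    rewrite IH. change (ssum al r (S n) (y + al)) with (ssum al r n (y + al) + r (y + al + INR n * al)).
    rewrite S_INR. replace (y + al + INR n * al) with (y + (INR n + 1) * al) by ring. ring.
Qed.

Lemma ssum_neg_eq al r n x : ssum_neg al r n x = ssum al r n (x - INR n * al).
Proof.
  induction n as [|n IH]; [simpl; reflexivity|].
  change (ssum_neg al r (S n) x) with (ssum_neg al r n x + r (x - INR (S n) * al)).
  rewrite IH, ssum_S. rewrite S_INR. replace (x - (INR n + 1) * al + al) with (x - INR n * al) by ring. ring.
Qed.

Lemma S_iter_neg al r n p : snd (S_iter al r (- Z.of_nat n) p) = snd p - ssum_neg al r n (fst p).
Proof.
  destruct n as [|m]; [simpl; ring|].
  change (- Z.of_nat (S m))%Z with (Zneg (Pos.of_succ_nat m)). simpl.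
  rewrite SuccNat2Pos.id_succ. reflexivity.
Qed.

Definition RH (r : R -> R) : Prop :=
  continuity r /\ (forall x, r (x + 1) = r x) /\ (forall x, r (x + / 2) = - r x).

Definition ZH al r x1 y1 : Prop :=
  (forall m : Z, ~ eqT1 (snd (S_iter al r m (x1, y1))) 0) /\
  (forall m : Z, ~ eqT1 (snd (S_iter al r m (x1 + / 2, 1 - y1))) 0).

Lemma NAx_all al r x1 y1 xb1 xb2 psi phi x : PH x1 y1 xb1 xb2 psi phi -> RH r -> ZH al r x1 y1 ->
  NAx al r xb1 xb2 psi phi x.
Proof.
  intros H [Hc [Hper Hodd]] [Z1 Z2] n. unfold NA.
  destruct (Rlt_dec 0 (bet xb1 xb2 psi phi (x + INR n * al))) as [|Hb]; [left; auto| right].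
  pose proof H as H'. destruct H' as [_ [_ [_ [_ [_ [_ [_ [_ [_ [_ [Hy _]]]]]]]]]]].
  destruct Hy as [k0 Hk0].
  pose proof (frac_eq (x + INR n * al)) as Eu. set (kk := Int_part (x + INR n * al)) in *.
  intro Hf.
  pose proof (frac_eq (alph xb1 xb2 psi phi (x + INR n * al) - (ssum al r n x + 0))) as Hm.
  rewrite Hf in Hm. set (m := Int_part _) in Hm.
  destruct (bet_zero x1 y1 xb1 xb2 psi phi _ H Hb) as [[E1 E2]|[E1 E2]]; rewrite E2 in Hm; rewrite E1 in Eu.
  - apply (Z1 (- Z.of_nat n)%Z). rewrite S_iter_neg. simpl.
    rewrite ssum_neg_eq.
    assert (Ex : x = x1 - INR n * al + IZR kk) by lra.
    rewrite Ex, ssum_per in Hm by auto.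
    exists (m - k0)%Z. rewrite minus_IZR. lra.
  - apply (Z2 (- Z.of_nat n)%Z). rewrite S_iter_neg. simpl.
    rewrite ssum_neg_eq.
    assert (Ex : x = x1 + / 2 - INR n * al + IZR kk) by lra.
    rewrite Ex, ssum_per in Hm by auto.
    exists (m + k0)%Z. rewrite plus_IZR. lra.
Qed.

Lemma notO_bet al x1 y1 xb1 xb2 psi phi x : PH x1 y1 xb1 xb2 psi phi -> ~ inOminus al x1 x ->
  forall n, 0 < bet xb1 xb2 psi phi (x + INR n * al).
Proof.
  intros H HO n. destruct (Rlt_dec 0 (bet xb1 xb2 psi phi (x + INR n * al))) as [|Hb]; auto.
  exfalso. apply HO. exists n.
  pose proof (frac_eq (x + INR n * al)) as Eu.
  destruct (bet_zero x1 y1 xb1 xb2 psi phi _ H Hb) as [[E1 _]|[E1 _]]; rewrite E1 in Eu.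
  - left. exists (Int_part (x + INR n * al)). lra.
  - right. exists (Int_part (x + INR n * al)). lra.
Qed.

Definition Fm al r xb1 xb2 psi phi : R -> R -> R := fun x L => Marc al r xb1 xb2 psi phi x 0 L.

Lemma FH_Fm al r x1 y1 xb1 xb2 psi phi x : PH x1 y1 xb1 xb2 psi phi -> FH (Fm al r xb1 xb2 psi phi x).
Proof.
  intros H. unfold Fm. split; [|split; [|split]].
  - intros L L' H1 H2 H3. apply (Marc_slope al r x1 y1); auto.
  - apply (Marc_one al r x1 y1); auto.
  - pose proof (Marc_range al r x1 y1 xb1 xb2 psi phi x 0 0 H ltac:(lra)). lra.
  - intros L e HL He. apply (Marc_rc al r x1 y1); auto.
Qed.

Lemma W_Fm al r x1 y1 xb1 xb2 psi phi : PH x1 y1 xb1 xb2 psi phi -> RH r -> ZH al r x1 y1 ->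
  Wprop (Fm al r xb1 xb2 psi phi).
Proof.
  intros H HR HZ x L d e H1 H2 H3 H4. unfold Fm.
  apply (Marc_W al r x1 y1); auto.
  - destruct HR; auto.
  - apply (NAx_all al r x1 y1); auto.
Qed.

Lemma tau_tauG al r x1 y1 xb1 xb2 psi phi x y : PH x1 y1 xb1 xb2 psi phi ->
  tau al r x1 y1 xb1 xb2 psi phi x y = tauG (Fm al r xb1 xb2 psi phi x) y.
Proof.
  intros H. unfold tau, tauG. f_equal. apply functional_extensionality. intro y'.
  apply propositional_extensionality. unfold tauP, Fm. split.
  - intros [H1 [H2 H3]]. rewrite (mu_Marc al r x1 y1) in H2 by auto.
    split; auto. split; auto. intros y'' H4 H5. apply H3; auto. rewrite (mu_Marc al r x1 y1) by auto. auto.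
  - intros [H1 [H2 H3]]. rewrite <- (mu_Marc al r x1 y1) in H2 by auto.
    split; auto. split; auto. intros y'' H4 H5. apply H3; auto. rewrite <- (mu_Marc al r x1 y1) by auto. auto.
Qed.

Lemma Fm_zero al r x1 y1 xb1 xb2 psi phi x : PH x1 y1 xb1 xb2 psi phi -> RH r -> ZH al r x1 y1 ->
  Fm al r xb1 xb2 psi phi x 0 = 0.
Proof. intros H HR HZ. unfold Fm. apply (Marc_zero al r x1 y1); auto. apply (NAx_all al r x1 y1); auto. Qed.

Lemma Fm_cont al r x1 y1 xb1 xb2 psi phi x : PH x1 y1 xb1 xb2 psi phi -> ~ inOminus al x1 x ->
  forall L e, 0 <= L <= 1 -> 0 < e -> exists d, 0 < d /\ forall L', 0 <= L' <= 1 -> Rabs (L' - L) < d ->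
    Rabs (Fm al r xb1 xb2 psi phi x L' - Fm al r xb1 xb2 psi phi x L) <= e.
Proof.
  intros H HO L e HL He. unfold Fm. apply (Marc_lcont al r x1 y1); auto.
  apply (notO_bet al x1 y1); auto.
Qed.

Lemma tauP_unique F y a b : tauP F y a -> tauP F y b -> a = b.
Proof.
  intros [Ha [Ha1 Ha2]] [Hb [Hb1 Hb2]].
  specialize (Ha2 b Hb Hb1). specialize (Hb2 a Ha Ha1). lra.
Qed.

Lemma tau_refl al r x1 y1 xb1 xb2 psi phi x s : PH x1 y1 xb1 xb2 psi phi -> RH r -> ZH al r x1 y1 ->
  0 < s < 1 ->
  tauG (Fm al r xb1 xb2 psi phi (x + / 2)) (1 - s) = 1 - tauG (Fm al r xb1 xb2 psi phi x) s.
Proof.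
  intros H HR HZ Hs. pose proof HR as [Hc [Hper Hodd]].
  set (F := Fm al r xb1 xb2 psi phi x). set (G := Fm al r xb1 xb2 psi phi (x + / 2)).
  assert (HF : FH F) by (apply (FH_Fm al r x1 y1); auto).
  assert (HG : FH G) by (apply (FH_Fm al r x1 y1); auto).
  assert (HGF : forall L, 0 <= L <= 1 -> G L = Marc al r xb1 xb2 psi phi x (- L) L).
  { intros L HL. unfold G, Fm. apply (Marc_refl al r x1 y1); auto. }
  destruct (tau_spec F s HF ltac:(lra)) as [Ht [Hge Hmin]].
  set (t := tauG F s) in *.
  assert (HF0 : F 0 = 0) by (unfold F; apply (Fm_zero al r x1 y1); auto).
  assert (Htp : 0 < t) by (destruct (Req_dec t 0) as [E|E]; [rewrite E, HF0 in Hge; lra| lra]).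
  apply (tauP_unique G (1 - s)); [apply tau_spec; auto; lra|].
  split; [lra|]. split.
  - destruct (Rle_dec (1 - s) (G (1 - t))) as [|Hn]; auto. exfalso.
    destruct HG as [_ [_ [_ Hrc]]].
    destruct (Hrc (1 - t) ((1 - s) - G (1 - t)) ltac:(lra) ltac:(lra)) as [d [Hd Hd']].
    set (t' := t - Rmin d t / 2).
    assert (0 < Rmin d t) by (apply Rmin_glb_lt; lra).
    assert (Rmin d t <= d) by apply Rmin_l. assert (Rmin d t <= t) by apply Rmin_r.
    assert (Ht' : 0 <= t' <= 1) by (unfold t'; lra).
    pose proof (tau_lt F s t' HF ltac:(lra) Ht' ltac:(change (t' < t); unfold t'; lra)).
    specialize (Hd' (1 - t') ltac:(unfold t'; lra) ltac:(unfold t'; lra)).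
    pose proof (Marc_cover al r x1 y1 xb1 xb2 psi phi x t' H Ht').
    rewrite HGF in Hd' by lra. replace (- (1 - t')) with (t' - 1) in Hd' by ring.
    unfold F, Fm in H3. lra.
  - intros y'' Hy'' HG'. destruct (Rle_dec (1 - t) y''); auto. exfalso.
    set (t2 := 1 - y'').
    pose proof (Marc_disj al r x1 y1 xb1 xb2 psi phi x t (t + (t2 - t) / 3) (t + 2 * (t2 - t) / 3) t2 H
       (NAx_all al r x1 y1 xb1 xb2 psi phi x H HR HZ) ltac:(lra) ltac:(unfold t2; lra) ltac:(unfold t2; lra)
       ltac:(unfold t2; lra) ltac:(unfold t2; lra)).
    pose proof (Marc_range al r x1 y1 xb1 xb2 psi phi x (t + (t2 - t) / 3)
       (t + 2 * (t2 - t) / 3 - (t + (t2 - t) / 3)) H ltac:(unfold t2; lra)).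
    rewrite HGF in HG' by lra. replace (t2 - 1) with (- y'') in H0 by (unfold t2; ring).
    replace (1 - t2) with y'' in H0 by (unfold t2; ring).
    unfold F, Fm in Hge. unfold t2 in *. lra.
Qed.

Lemma dT1_decomp u v d : dT1 u v < d -> d <= / 2 ->
  exists h k, u = v + h + IZR k /\ Rabs h < d.
Proof.
  intros H Hd. unfold dT1 in H. pose proof (frac_range (u - v)). pose proof (frac_eq (u - v)).
  set (f := frac (u - v)) in *. set (n := Int_part (u - v)) in *.
  unfold Rmin in H. destruct Rle_dec.
  - exists f, n. split; [lra|]. rewrite Rabs_right; lra.
  - exists (f - 1), (n + 1)%Z. split; [rewrite plus_IZR; simpl; lra|]. rewrite Rabs_left; lra.
Qed.

Lemma dT1_bound u v h k : u = v + h + IZR k -> dT1 u v <= Rabs h.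
Proof.
  intros E. unfold dT1. replace (u - v) with (h + IZR k) by lra. rewrite frac_shift.
  pose proof (frac_range h). pose proof (abs_ge h).
  destruct (Rlt_dec (Rabs h) 1).
  - destruct (Rle_dec 0 h).
    + rewrite frac_id by (split; lra). eapply Rle_trans; [apply Rmin_l| lra].
    + rewrite (frac_char h (-1) (h + 1)) by (simpl; lra). eapply Rle_trans; [apply Rmin_r| lra].
  - unfold Rmin; destruct Rle_dec; lra.
Qed.

Lemma dT1_lt u v e : (exists h k, u = v + h + IZR k /\ Rabs h < e) -> dT1 u v < e.
Proof. intros [h [k [E H]]]. pose proof (dT1_bound u v h k E). lra. Qed.

Lemma Fm_per al r xb1 xb2 psi phi x k : (forall x, r (x + 1) = r x) ->
  Fm al r xb1 xb2 psi phi (x + IZR k) = Fm al r xb1 xb2 psi phi x.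
Proof. intros Hr. apply functional_extensionality. intro L. unfold Fm. apply Marc_per; auto. Qed.

Lemma tauG_range F y : FH F -> y <= 1 -> 0 <= tauG F y <= 1.
Proof. intros H Hy. destruct (tau_spec F y H Hy) as [R _]. auto. Qed.

Lemma tauG_one F : FH F -> tauG F 1 = 1.
Proof. intros H. pose proof H as [_ [H1 _]]. rewrite <- H1 at 1. apply tau_F; auto; lra. Qed.

Lemma frac_near s h2 : 0 <= s < 1 -> Rabs h2 < / 2 ->
  (frac (s + h2) = s + h2 /\ 0 <= s + h2 < 1) \/ (frac (s + h2) = s + h2 + 1 /\ s + h2 < 0) \/
  (frac (s + h2) = s + h2 - 1 /\ 1 <= s + h2).
Proof.
  intros Hs Hh. apply abs_lt_inv in Hh.
  destruct (Rlt_dec (s + h2) 0).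
  - right; left. split; [apply (frac_char _ (-1)); simpl; lra| lra].
  - destruct (Rlt_dec (s + h2) 1).
    + left. split; [apply frac_id; lra| lra].
    + right; right. split; [apply (frac_char _ 1); simpl; lra| lra].
Qed.

Lemma T_cont al r x1 y1 xb1 xb2 psi phi : PH x1 y1 xb1 xb2 psi phi -> RH r -> ZH al r x1 y1 ->
  torus_continuous (Tmap al r x1 y1 xb1 xb2 psi phi).
Proof.
  intros H HR HZ p eps He. pose proof HR as [Hc [Hper Hodd]].
  set (Ff := Fm al r xb1 xb2 psi phi).
  assert (HF : forall x, FH (Ff x)) by (intro; apply (FH_Fm al r x1 y1); auto).
  assert (HW : Wprop Ff) by (apply (W_Fm al r x1 y1); auto).
  set (x := fst p). set (s := frac (snd p)).
  pose proof (frac_range (snd p)) as Hs. fold s in Hs.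
  destruct (tau_cont Ff x s (eps / 2) HF HW ltac:(lra) ltac:(lra)) as [r1 [Hr1 C1]].
  destruct (tau_cont Ff x 0 (eps / 2) HF HW ltac:(lra) ltac:(lra)) as [r0 [Hr0 C0]].
  destruct (tau_cont Ff x 1 (eps / 2) HF HW ltac:(lra) ltac:(lra)) as [r2 [Hr2 C2]].
  set (d := Rmin (Rmin (Rmin r1 r0) (Rmin r2 eps)) (/ 2)).
  assert (Hd : 0 < d) by (unfold d; repeat apply Rmin_glb_lt; lra).
  assert (d <= r1 /\ d <= r0 /\ d <= r2 /\ d <= eps /\ d <= / 2) as [D1 [D2 [D3 [D4 D5]]]]
    by (unfold d, Rmin; repeat destruct Rle_dec; lra).
  exists d. split; auto. intros q Hq. unfold dT2 in Hq.
  assert (Hq1 : dT1 (fst q) (fst p) < d) by (eapply Rle_lt_trans; [apply Rmax_l| exact Hq]).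
  assert (Hq2 : dT1 (snd q) (snd p) < d) by (eapply Rle_lt_trans; [apply Rmax_r| exact Hq]).
  destruct (dT1_decomp _ _ _ Hq1 D5) as [h [k [Eh Hh]]].
  destruct (dT1_decomp _ _ _ Hq2 D5) as [h2 [k2 [Eh2 Hh2]]].
  unfold dT2, Tmap. simpl. apply Rmax_lub_lt; [eapply Rle_lt_trans; [apply (dT1_bound _ _ h k Eh)| lra]|].
  rewrite !(tau_tauG al r x1 y1) by auto. fold Ff. fold x in Eh.
  change (fst p) with x. change (frac (snd p)) with s. rewrite Eh. unfold Ff. rewrite (Fm_per al r xb1 xb2 psi phi (x + h) k Hper). fold Ff.
  assert (Es : snd q = (s + h2) + IZR (Int_part (snd p) + k2)) by (rewrite plus_IZR; unfold s, frac in *; lra).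
  rewrite Es, frac_shift. fold s.
  pose proof (tau_zero (Ff x) (HF x)) as T0. pose proof (tauG_one (Ff x) (HF x)) as T1.
  destruct (frac_near s h2 Hs ltac:(lra)) as [[E1 R1]|[[E1 R1]|[E1 R1]]]; rewrite E1.
  - apply dT1_lt. exists (tauG (Ff (x + h)) (s + h2) - tauG (Ff x) s), 0%Z. split; [simpl; ring|].
    specialize (C1 h (s + h2) ltac:(lra) ltac:(lra) ltac:(replace (s + h2 - s) with h2 by ring; lra)). lra.
  - apply dT1_lt. exists (tauG (Ff (x + h)) (s + h2 + 1) - tauG (Ff x) s - 1), 1%Z. split; [simpl; ring|].
    specialize (C2 h (s + h2 + 1) ltac:(lra) ltac:(apply abs_lt_inv in Hh2; lra)
       ltac:(apply abs_lt; apply abs_lt_inv in Hh2; lra)).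
    specialize (C0 0 s ltac:(rewrite Rabs_R0; lra) ltac:(lra) ltac:(apply abs_lt; apply abs_lt_inv in Hh2; lra)).
    rewrite Rplus_0_r in C0. rewrite T0 in C0. rewrite T1 in C2.
    apply abs_lt_inv in C0, C2. apply abs_lt. lra.
  - apply dT1_lt. exists (tauG (Ff (x + h)) (s + h2 - 1) - tauG (Ff x) s + 1), (-1)%Z. split; [simpl; ring|].
    specialize (C0 h (s + h2 - 1) ltac:(lra) ltac:(apply abs_lt_inv in Hh2; lra)
       ltac:(apply abs_lt; apply abs_lt_inv in Hh2; lra)).
    specialize (C2 0 s ltac:(rewrite Rabs_R0; lra) ltac:(lra) ltac:(apply abs_lt; apply abs_lt_inv in Hh2; lra)).
    rewrite Rplus_0_r in C2. rewrite T0 in C0. rewrite T1 in C2.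
    apply abs_lt_inv in C0, C2. apply abs_lt. lra.
Qed.

Lemma T_surj_fiber al r x1 y1 xb1 xb2 psi phi a v : PH x1 y1 xb1 xb2 psi phi ->
  exists y, eqT2 (Tmap al r x1 y1 xb1 xb2 psi phi (a, y)) (a, v).
Proof.
  intros H. set (t := frac v). pose proof (frac_range v) as Ht. fold t in Ht.
  exists (Fm al r xb1 xb2 psi phi a t).
  pose proof (Marc_range al r x1 y1 xb1 xb2 psi phi a 0 t H ltac:(lra)).
  unfold Tmap. simpl. rewrite (tau_tauG al r x1 y1) by auto.
  unfold Fm at 2. rewrite frac_id by lra. fold (Fm al r xb1 xb2 psi phi a t).
  rewrite tau_F; [| apply (FH_Fm al r x1 y1); auto | lra].
  split; [apply eqT1_refl| apply eqT1_sym, eqT1_frac_self].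
Qed.

Lemma T_P al r x1 y1 xb1 xb2 psi phi p : PH x1 y1 xb1 xb2 psi phi -> RH r -> ZH al r x1 y1 ->
  eqT2 (Tmap al r x1 y1 xb1 xb2 psi phi (Pmap p)) (Pmap (Tmap al r x1 y1 xb1 xb2 psi phi p)).
Proof.
  intros H HR HZ. destruct p as [x y]. unfold Tmap, Pmap. simpl.
  split; [apply eqT1_refl|]. simpl.
  rewrite !(tau_tauG al r x1 y1) by auto.
  pose proof (frac_range y). pose proof (frac_eq y).
  destruct (Req_dec (frac y) 0) as [E|E].
  - rewrite E. rewrite (frac_char (1 - y) (1 - Int_part y) 0) by (try rewrite minus_IZR; simpl; lra).
    rewrite !tau_zero by (apply (FH_Fm al r x1 y1); auto).
    exists (-1)%Z. simpl. ring.
  - rewrite (frac_char (1 - y) (- Int_part y) (1 - frac y)) by (try rewrite opp_IZR; lra).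
    rewrite (tau_refl al r x1 y1) by (auto; lra). apply eqT1_refl.
Qed.

Lemma tau_fiber al r x1 y1 xb1 xb2 psi phi x : PH x1 y1 xb1 xb2 psi phi -> RH r -> ZH al r x1 y1 ->
  ~ inOminus al x1 x ->
  (forall y, 0 <= y <= 1 -> Fm al r xb1 xb2 psi phi x (tauG (Fm al r xb1 xb2 psi phi x) y) = y) /\
  (forall y y', 0 <= y -> y < y' -> y' <= 1 ->
     tauG (Fm al r xb1 xb2 psi phi x) y < tauG (Fm al r xb1 xb2 psi phi x) y').
Proof.
  intros H HR HZ HO. split.
  - intros y Hy. apply tau_eq; auto.
    + apply (FH_Fm al r x1 y1); auto.
    + apply (Fm_zero al r x1 y1); auto.
    + apply (Fm_cont al r x1 y1); auto.
  - intros y y' H1 H2 H3. apply tau_strict; auto.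
    + apply (FH_Fm al r x1 y1); auto.
    + apply (Fm_zero al r x1 y1); auto.
    + apply (Fm_cont al r x1 y1); auto.
Qed.

Lemma T_inj al r x1 y1 xb1 xb2 psi phi p q : PH x1 y1 xb1 xb2 psi phi -> RH r -> ZH al r x1 y1 ->
  ~ inOminus al x1 (fst p) -> eqT2 (Tmap al r x1 y1 xb1 xb2 psi phi p) (Tmap al r x1 y1 xb1 xb2 psi phi q) ->
  eqT2 p q.
Proof.
  intros H HR HZ HO [E1 E2]. pose proof HR as [Hc [Hper Hodd]].
  destruct p as [x y]; destruct q as [x' y']. unfold Tmap in *. simpl in *.
  split; auto. rewrite !(tau_tauG al r x1 y1) in E2 by auto.
  destruct E1 as [k Hk]. rewrite Hk, (Fm_per al r xb1 xb2 psi phi x' k Hper) in E2.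
  rewrite Hk in HO.
  destruct (tau_fiber al r x1 y1 xb1 xb2 psi phi x' H HR HZ) as [Heq _]; [|].
  { intro HH. apply HO. destruct HH as [j [[m Hm]|[m Hm]]]; exists j; [left|right]; exists (m + k)%Z;
    rewrite plus_IZR; lra. }
  set (F := Fm al r xb1 xb2 psi phi x') in *.
  pose proof (frac_range y). pose proof (frac_range y').
  assert (HF : FH F) by (apply (FH_Fm al r x1 y1); auto).
  pose proof (tauG_range F (frac y) HF ltac:(lra)). pose proof (tauG_range F (frac y') HF ltac:(lra)).
  pose proof (Heq (frac y) ltac:(lra)) as Q1. pose proof (Heq (frac y') ltac:(lra)) as Q2.
  assert (N1 : tauG F (frac y) < 1).
  { destruct (Req_dec (tauG F (frac y)) 1) as [E|E]; [|lra]. rewrite E in Q1. pose proof HF as [_ [HF1 _]]. lra. }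
  assert (N2 : tauG F (frac y') < 1).
  { destruct (Req_dec (tauG F (frac y')) 1) as [E|E]; [|lra]. rewrite E in Q2. pose proof HF as [_ [HF1 _]]. lra. }
  assert (Et : tauG F (frac y) = tauG F (frac y')).
  { destruct E2 as [m Hm].
    assert (Hm1 : -1 < IZR m < 1) by lra.
    assert (m = 0%Z) by (destruct Hm1 as [A B]; apply lt_IZR in A; apply lt_IZR in B; lia).
    subst m. simpl in Hm. lra. }
  apply eqT1_of_frac. simpl. rewrite <- Q1, <- Q2, Et. reflexivity.
Qed.

Theorem mainTheorem5
  (al : R) (r : R -> R) (x1 y1 xb1 xb2 : R) (psi phi : R -> R)
  (* alpha irrational *)
  (Hal : irrational al)
  (* r : T^1 -> R continuous, antisymmetric, positive on (0,1/2) *)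
  (Hrc : continuity r)
  (Hrper : forall x, r (x + 1) = r x)
  (Hrodd : forall x, r (x + / 2) = - r x)
  (Hr0 : r 0 = 0) (Hrh : r (/ 2) = 0)
  (Hrpos : forall x, 0 < x < / 2 -> 0 < r x < / 4)
  (* S minimal *)
  (HS : S_minimal al r)
  (* x_1 rational in (0.1,0.2) *)
  (Hx1 : 1 / 10 < x1 < 2 / 10) (Hx1q : rational x1)
  (* orbits of z_1, z_2 avoid {Y = 0} and {Y = - r(R^m x_j)} *)
  (Hz1 : forall m : Z,
     ~ eqT1 (snd (S_iter al r m (x1, y1))) 0 /\
     ~ eqT1 (snd (S_iter al r m (x1, y1))) (- r (x1 + IZR m * al)))
  (Hz2 : forall m : Z,
     ~ eqT1 (snd (S_iter al r m (x1 + / 2, 1 - y1))) 0 /\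
     ~ eqT1 (snd (S_iter al r m (x1 + / 2, 1 - y1))) (- r (x1 + / 2 + IZR m * al)))
  (* xb1 < x1 < xb2, [xb1,xb2] in (0,1/2) *)
  (Hxb : 0 < xb1 /\ xb1 < x1 /\ x1 < xb2 /\ xb2 < / 2)
  (Hpsic : continuous_on_interval psi xb1 xb2)
  (Hphic : continuous_on_interval phi xb1 xb2)
  (Hpsir : forall x, xb1 <= x <= xb2 -> 0 <= psi x <= 1)
  (Hphir : forall x, xb1 <= x <= xb2 -> 0 <= phi x <= 1)
  (Hpsi1 : psi xb1 = 0) (Hphi1 : phi xb1 = 1)
  (Hpsi2 : psi xb2 = 1) (Hphi2 : phi xb2 = 0)
  (Hlt : forall x, xb1 <= x < x1 -> psi x < phi x)
  (Hgt : forall x, x1 < x <= xb2 -> psi x > phi x)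
  (Heq : psi x1 = phi x1) (Heqy : eqT1 (psi x1) y1) :
  let T := Tmap al r x1 y1 xb1 xb2 psi phi in
  let tau_ := tau al r x1 y1 xb1 xb2 psi phi in
  let mu_ := mu al r x1 y1 xb1 xb2 psi phi in
  (* T continuous, surjective, commutes with P *)
  torus_continuous T /\ torus_surjective T /\
  (forall p, eqT2 (T (Pmap p)) (Pmap (T p))) /\
  (* fiberwise properties off O^- *)
  (forall x, ~ inOminus al x1 x ->
     (forall y, 0 <= y <= 1 -> mu_ x (tau_ x y) = y) /\
     (forall y y', 0 <= y -> y < y' -> y' <= 1 -> tau_ x y < tau_ x y')) /\
  (* T injective on T^2 \ (O^- x T^1) *)
  (forall p q, ~ inOminus al x1 (fst p) -> ~ inOminus al x1 (fst q) ->
     eqT2 (T p) (T q) -> eqT2 p q) /\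
  (* T maps each fiber {x} x T^1, x not in O^-, bijectively onto itself *)
  (forall x, ~ inOminus al x1 x ->
     (forall y, eqT1 (fst (T (x, y))) x) /\
     (forall y z, eqT2 (T (x, y)) (T (x, z)) -> eqT1 y z) /\
     (forall v, exists y, eqT2 (T (x, y)) (x, v))).
Proof.
  intros T tau_ mu_.
  assert (H : PH x1 y1 xb1 xb2 psi phi).
  { destruct Hxb as (?&?&?&?). unfold PH. repeat match goal with |- _ /\ _ => split end; auto. }
  assert (HR : RH r) by (repeat split; auto).
  assert (HZ : ZH al r x1 y1) by (split; intro m; [apply (proj1 (Hz1 m)) | apply (proj1 (Hz2 m))]).
  split; [apply (T_cont al r x1 y1); auto|].
  split; [intro q; destruct q as [a v];
    destruct (T_surj_fiber al r x1 y1 xb1 xb2 psi phi a v H) as [y Hy]; exists (a, y); exact Hy|].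
  split; [intro p; apply (T_P al r x1 y1); auto|].
  split.
  { intros x HO. unfold tau_, mu_.
    destruct (tau_fiber al r x1 y1 xb1 xb2 psi phi x H HR HZ HO) as [F1 F2]. split.
    - intros y Hy. rewrite (tau_tauG al r x1 y1) by auto. assert (HF : FH (Fm al r xb1 xb2 psi phi x)) by (apply (FH_Fm al r x1 y1); auto).
      pose proof (tauG_range _ y HF ltac:(lra)).
      rewrite (mu_Marc al r x1 y1) by auto.
      apply F1; auto.
    - intros y y' H1 H2 H3. rewrite !(tau_tauG al r x1 y1) by auto. apply F2; auto. }
  split.
  { intros p q Hp Hq HT. apply (T_inj al r x1 y1 xb1 xb2 psi phi); auto. }
  intros x HO. split; [intro y; apply eqT1_refl|]. split.
  - intros y z HT. apply (T_inj al r x1 y1 xb1 xb2 psi phi (x, y) (x, z)) in HT; auto. destruct HT; auto.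
  - intro v. apply (T_surj_fiber al r x1 y1); auto.
Qed.
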